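(* For $\varepsilon>0$ let $q_\varepsilon=\frac1\varepsilon\delta(t-\frac12-2\varepsilon)$. For every $n_0\in\mathbb N$ there exists $\varepsilon_0>0$ such that $$G^a_{4n-2}(q_\varepsilon)=G^0_{4n-2}(q_\varepsilon)\ne\emptyset\quad\text{for all }(a,\varepsilon,n)\in\mathbb R\times(0,\varepsilon_0)\times\{1,\dots,n_0\}.$$
   Context: Fix an integer $N\ge1$. The potential $q_\varepsilon$ is a $\delta$-interaction of strength $1/\varepsilon$ at $t_0=\frac12+2\varepsilon\in(0,1)$. That is, $-y''+q_\varepsilon y=\lambda y$ means $-y''=\lambda y$ on $[0,1]\setminus\{t_0\}$, with $y$ continuous at $t_0$ and $y'(t_0+)-y'(t_0-)=\frac1\varepsilon y(t_0)$. Hill-equation data. For $\lambda\in\mathbb C$, let $\vartheta,\varphi$ solve this equation with $\vartheta(0)=\varphi'(0)=1$ and $\vartheta'(0)=\varphi(0)=0$. Put $F=(\varphi'(1,\cdot)+\vartheta(1,\cdot))/2$ and $F_-=(\varphi'(1,\cdot)-\vartheta(1,\cdot))/2$. Operators. Let $a=a_1'+a_2'$ with $a_1',a_2'\in\mathbb R$, let $s=e^{2\pi i/N}$, and for $k\in\mathbb Z_N$ set $c_k=\cos(\pi k/N+a)$ and $s_k=\sin(\pi k/N+a)$. $H_k^a$ acts in $L^2(\Gamma^1)$, where $\Gamma^1$ has edges $\Gamma_{n,j}$, $(n,j)\in\mathbb Z\times\{1,\dots,6\}$, each identified with $[0,1]$, by $-f''_{n,j}+q_\varepsilon f_{n,j}$,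 with boundary conditions for all $n$: - $e^{ia_1'}f_{n,1}(1)=f_{n,2}(0)=f_{n,5}(0)$; - $e^{ia_2'}f_{n,2}(1)=f_{n,3}(0)=f_{n,6}(0)$; - $e^{ia_1'}f_{n,3}(1)=f_{n,4}(0)=e^{ia_1'}f_{n-1,6}(1)$; - $e^{ia_2'}s^kf_{n,4}(1)=f_{n,1}(0)=e^{-ia_1'}f_{n-1,5}(1)$; - $e^{ia_1'}f'_{n,1}(1)=f'_{n,2}(0)+f'_{n,5}(0)$; - $e^{ia_2'}f'_{n,2}(1)=f'_{n,3}(0)+f'_{n,6}(0)$; - $e^{ia_1'}f'_{n,3}(1)+e^{ia_1'}f'_{n-1,6}(1)=f'_{n,4}(0)$; - $e^{ia_2'}s^kf'_{n,4}(1)+e^{-ia_1'}f'_{n-1,5}(1)=f'_{n,1}(0)$. $H^a=\bigoplus_kH_k^a$. Lyapunov functions. $F_{k,\nu}=\xi_k-(-1)^\nu\sqrt{\rho_k}$, with $\xi_k=\frac{9F^2-F_-^2-1}2-s_k^2$ and $\rho_k=(9F^2-s_k^2)c_k^2+s_k^2F_-^2$. Set $D_k^\pm=4(F_{k,1}\mp1)(F_{k,2}\mp1)$. Antiperiodic eigenvalues. The zeros of $D_0^-$ at $a=0$ are labeled $\lambda^{0,-}_{2,1}\le\lambda^{0,-}_{1,1}\le\lambda^{0,+}_{1,1}\le\lambda^{0,+}_{2,1}\le\lambda^{0,-}_{2,3}\le\cdots$. Set $\varkappa_n=(\lambda^{0,-}_{1,2n-1},\lambda^{0,+}_{1,2n-1})$.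 Let $r^\mp_{k,n}$ be the smallest/largest zero of $\rho_k$ in $\overline{\varkappa_n}$, and $v_k=|F_-|-c_k^2$. Gaps. $E^{k,\pm}_{1,2n-1}=\lambda^{0,\pm}_{1,2n-1}$ if $v_k(\lambda^{0,\pm}_{1,2n-1})\ge0$, and $E^{k,\pm}_{1,2n-1}=r^\pm_{k,n}$ otherwise. Define $G^a_{4n-2}=\bigcap_{k\in\mathbb Z_N}(E^{k,-}_{1,2n-1},E^{k,+}_{1,2n-1})$, the gaps of $\sigma_{ac}(H^a)$ inside $\varkappa_n$. The notation $G^a_{4n-2}(q_\varepsilon)$ indicates the potential used. *)

(* Defs.v *)
From Stdlib Require Import Reals Lra.
Open Scope R_scope.

(* Fundamental solutions of -y'' = l y (free equation) at point x:
   cf l x = cos(sqrt l x),  sf l x = sin(sqrt l x)/sqrt l (real l, with the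
   hyperbolic / polynomial continuation for l <= 0). *)
Definition cf (l x : R) : R :=
  if Rle_dec 0 l then cos (sqrt l * x) else cosh (sqrt (- l) * x).
Definition sf (l x : R) : R :=
  if Rlt_dec 0 l then sin (sqrt l * x) / sqrt l
  else if Rlt_dec l 0 then sinh (sqrt (- l) * x) / sqrt (- l)
  else x.

Definition t0 (eps : R) : R := / 2 + 2 * eps.

(* vartheta(1), vartheta'(1), varphi(1), varphi'(1) for q_eps = (1/eps) delta(t - t0):
   the solution is the free one on [0,t0], and on [t0,1] it is the free one plus
   (1/eps) y(t0) sf(t - t0) (continuity + derivative jump (1/eps) y(t0)). *)
Definition theta1 (eps l : R) : R :=
  cf l 1 + / eps * cf l (t0 eps) * sf l (1 - t0 eps).
Definition theta1' (eps l : R) : R :=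
  - l * sf l 1 + / eps * cf l (t0 eps) * cf l (1 - t0 eps).
Definition phi1 (eps l : R) : R :=
  sf l 1 + / eps * sf l (t0 eps) * sf l (1 - t0 eps).
Definition phi1' (eps l : R) : R :=
  cf l 1 + / eps * sf l (t0 eps) * cf l (1 - t0 eps).

Definition Fh (eps l : R) : R := (phi1' eps l + theta1 eps l) / 2.
Definition Fm (eps l : R) : R := (phi1' eps l - theta1 eps l) / 2.

(* c_k, s_k for k in Z_N, represented by k : nat with k < N *)
Definition ck (N : nat) (a : R) (k : nat) : R := cos (PI * INR k / INR N + a).
Definition sk (N : nat) (a : R) (k : nat) : R := sin (PI * INR k / INR N + a).

Definition xi (N : nat) (a : R) (k : nat) (eps l : R) : R :=
  (9 * (Fh eps l)^2 - (Fm eps l)^2 - 1) / 2 - (sk N a k)^2.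
Definition rho (N : nat) (a : R) (k : nat) (eps l : R) : R :=
  (9 * (Fh eps l)^2 - (sk N a k)^2) * (ck N a k)^2 + (sk N a k)^2 * (Fm eps l)^2.

(* D_k^- = 4 (F_{k,1} + 1)(F_{k,2} + 1) with F_{k,nu} = xi_k -(-1)^nu sqrt(rho_k);
   the product of the two conjugate factors is (xi_k + 1)^2 - rho_k. *)
Definition Dm_minus (N : nat) (a : R) (k : nat) (eps l : R) : R :=
  4 * ((xi N a k eps l + 1)^2 - rho N a k eps l).

Definition vk (N : nat) (a : R) (k : nat) (eps l : R) : R :=
  Rabs (Fm eps l) - (ck N a k)^2.

Definition zero_mult (f : R -> R) (x : R) (m : nat) : Prop :=
  exists g : R -> R, continuity g /\ (forall y, f y = (y - x)^m * g y) /\ g x <> 0.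

(* mu lists the (real) zeros of f in nondecreasing order, counted with multiplicity *)
Definition enum_zeros (f : R -> R) (mu : nat -> R) : Prop :=
  (forall i j, (i <= j)%nat -> mu i <= mu j) /\
  (forall x m, zero_mult f x m <->
     exists j0, forall j, mu j = x <-> (j0 <= j /\ j < j0 + m)%nat).

(* labelling mu_0 <= mu_1 <= ... = lambda^{0,-}_{2,1} <= lambda^{0,-}_{1,1} <=
   lambda^{0,+}_{1,1} <= lambda^{0,+}_{2,1} <= lambda^{0,-}_{2,3} <= ... ;
   for n >= 1: *)
Definition lam_minus (mu : nat -> R) (n : nat) : R := mu (4 * (n - 1) + 1)%nat.
Definition lam_plus (mu : nat -> R) (n : nat) : R := mu (4 * (n - 1) + 2)%nat.

Definition is_min_zero (f : R -> R) (lo hi r : R) : Prop :=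
  lo <= r <= hi /\ f r = 0 /\ (forall y, lo <= y <= hi -> f y = 0 -> r <= y).
Definition is_max_zero (f : R -> R) (lo hi r : R) : Prop :=
  lo <= r <= hi /\ f r = 0 /\ (forall y, lo <= y <= hi -> f y = 0 -> y <= r).

Definition Eminus (N : nat) (a : R) (k : nat) (eps : R) (mu : nat -> R) (n : nat)
  (e : R) : Prop :=
  let lm := lam_minus mu n in let lp := lam_plus mu n in
  (0 <= vk N a k eps lm /\ e = lm) \/
  (vk N a k eps lm < 0 /\ is_min_zero (rho N a k eps) lm lp e).

Definition Eplus (N : nat) (a : R) (k : nat) (eps : R) (mu : nat -> R) (n : nat)
  (e : R) : Prop :=
  let lm := lam_minus mu n in let lp := lam_plus mu n in
  (0 <= vk N a k eps lp /\ e = lp) \/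
  (vk N a k eps lp < 0 /\ is_max_zero (rho N a k eps) lm lp e).

Definition in_gap (N : nat) (a eps : R) (mu : nat -> R) (n : nat) (lam : R) : Prop :=
  forall k : nat, (k < N)%nat ->
    exists em ep, Eminus N a k eps mu n em /\ Eplus N a k eps mu n ep /\
                  em < lam < ep.

(* Main.v *)
Require Import Defs.
From Stdlib Require Import Reals Lra Lia Classical ClassicalEpsilon.
From Coquelicot Require Import Coquelicot.
Open Scope R_scope.

Lemma cont_eps (h : R -> R) x : continuity_pt h x ->
  forall e, 0 < e -> exists d, 0 < d /\ forall y, Rabs (y - x) < d -> Rabs (h y - h x) < e.
Proof.
  intros H e He.
  unfold continuity_pt, continue_in, limit1_in, limit_in in H. simpl in H.
  destruct (H e He) as [d [Hd H2]]. exists d. split; auto.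
  intros y Hy. destruct (Req_dec y x) as [->|Hne].
  - replace (h x - h x) with 0 by ring. rewrite Rabs_R0; lra.
  - apply H2. split. split; [exact I| auto]. exact Hy.
Qed.

Lemma eps_cont (h : R -> R) x :
  (forall e, 0 < e -> exists d, 0 < d /\ forall y, Rabs (y - x) < d -> Rabs (h y - h x) < e)
  -> continuity_pt h x.
Proof.
  intros H. unfold continuity_pt, continue_in, limit1_in, limit_in. simpl.
  intros e He. destruct (H e He) as [d [Hd H2]]. exists d. split; auto.
  intros y [_ Hy]. apply H2. exact Hy.
Qed.

Lemma cont_punct (h : R -> R) x : continuity_pt h x ->
  (forall y, y <> x -> h y = 0) -> h x = 0.
Proof.
  intros Hc Hz. destruct (Req_dec (h x) 0) as [E|E]; auto. exfalso.
  destruct (cont_eps h x Hc (Rabs (h x)) (Rabs_pos_lt _ E)) as [d [Hd H]].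
  specialize (H (x + d/2)). rewrite Hz in H by lra.
  replace (x + d/2 - x) with (d/2) in H by ring.
  rewrite Rabs_right in H by lra. rewrite Rabs_minus_sym, Rminus_0_r in H. lra.
Qed.

Lemma cont_powx x n : continuity (fun y => (y - x) ^ n).
Proof.
  induction n; simpl.
  - apply continuity_const. intros a b; reflexivity.
  - apply continuity_mult; auto. apply continuity_minus. apply derivable_continuous, derivable_id.
    apply continuity_const. intros a b; reflexivity.
Qed.

Lemma zm_pos f x m : zero_mult f x m -> f x = 0 -> (1 <= m)%nat.
Proof.
  intros [g [Hg [Hf Hx]]] H0. destruct m; [|lia]. exfalso.
  rewrite Hf in H0. simpl in H0. lra.
Qed.

Lemma zm_zero f x m : zero_mult f x m -> (1 <= m)%nat -> f x = 0.
Proof.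
  intros [g [Hg [Hf Hx]]] H. rewrite Hf. replace (x - x) with 0 by ring.
  destruct m; [lia|]. simpl. ring.
Qed.

Lemma zm_unique f x m m' : zero_mult f x m -> zero_mult f x m' -> m = m'.
Proof.
  assert (K: forall m m', (m < m')%nat -> zero_mult f x m -> zero_mult f x m' -> False).
  { intros a b Hab [g [Hg [Hf Hx]]] [g' [Hg' [Hf' Hx']]].
    set (h := fun y => g y - (y - x) ^ (b - a) * g' y).
    assert (Hc : continuity_pt h x).
    { unfold h. apply continuity_pt_minus. apply Hg.
      apply continuity_pt_mult. apply cont_powx. apply Hg'. }
    assert (Hz : forall y, y <> x -> h y = 0).
    { intros y Hy. unfold h. assert (Hn: (y - x) ^ a <> 0) by (apply pow_nonzero; lra).
      apply (Rmult_eq_reg_l ((y - x) ^ a)); auto.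
      replace ((y - x) ^ a * (g y - (y - x) ^ (b - a) * g' y)) with
        ((y - x) ^ a * g y - ((y - x) ^ a * (y - x) ^ (b - a)) * g' y) by ring.
      rewrite <- pow_add. replace (a + (b - a))%nat with b by lia.
      rewrite <- Hf, <- Hf'. ring. }
    pose proof (cont_punct h x Hc Hz). unfold h in H.
    replace (x - x) with 0 in H by ring.
    rewrite pow_i in H by lia. apply Hx. lra. }
  intros H1 H2. destruct (Nat.lt_trichotomy m m') as [L|[L|L]]; auto.
  - exfalso; eauto.
  - exfalso; eauto.
Qed.

Definition isol (f : R -> R) := forall x, exists d, 0 < d /\
  forall y, 0 < Rabs (y - x) < d -> f y <> 0.

Lemma zm_isol f x m : zero_mult f x m ->
  exists d, 0 < d /\ forall y, 0 < Rabs (y - x) < d -> f y <> 0.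
Proof.
  intros [g [Hg [Hf Hx]]].
  destruct (cont_eps g x (Hg x) (Rabs (g x)) (Rabs_pos_lt _ Hx)) as [d [Hd H]].
  exists d; split; auto. intros y [Hy1 Hy2]. rewrite Hf. apply Rmult_integral_contrapositive.
  split. apply pow_nonzero. intro E. rewrite E, Rabs_R0 in Hy1. lra.
  intro E. specialize (H y Hy2). rewrite E, Rminus_0_l, Rabs_Ropp in H. lra.
Qed.

Lemma cont_isol f x : continuity_pt f x -> f x <> 0 ->
  exists d, 0 < d /\ forall y, 0 < Rabs (y - x) < d -> f y <> 0.
Proof.
  intros Hc Hx.
  destruct (cont_eps f x Hc (Rabs (f x)) (Rabs_pos_lt _ Hx)) as [d [Hd H]].
  exists d; split; auto. intros y [_ Hy] E. specialize (H y Hy).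
  rewrite E, Rminus_0_l, Rabs_Ropp in H. lra.
Qed.


Definition nxt (f : R -> R) (x : R) : R :=
  epsilon (inhabits 0) (fun s => x < s /\ f s = 0 /\ forall y, x < y -> f y = 0 -> s <= y).

Lemma nxt_ex (f : R -> R) x : isol f -> (exists y, x < y /\ f y = 0) ->
  exists s, x < s /\ f s = 0 /\ forall y, x < y -> f y = 0 -> s <= y.
Proof.
  intros Hi [y0 [Hy0 Hy0']].
  set (E := fun y => x < - y /\ f (- y) = 0).
  assert (Hb : bound E). { exists (- x). intros y [H _]. lra. }
  assert (Hn : exists y, E y). { exists (- y0). unfold E. rewrite Ropp_involutive. auto. }
  destruct (completeness E Hb Hn) as [m [Hub Hlub]].
  set (s := - m).
  assert (Hlow : forall y, x < y -> f y = 0 -> s <= y).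
  { intros y H1 H2. unfold s. assert (E (- y)) by (unfold E; rewrite Ropp_involutive; auto).
    specialize (Hub _ H). lra. }
  assert (Happ : forall d, 0 < d -> exists y, x < y /\ f y = 0 /\ y < s + d).
  { intros d Hd. apply NNPP. intro C.
    assert (m <= m - d).
    { apply Hlub. intros y [H1 H2]. apply Rnot_lt_le. intro H3. apply C.
      exists (- y). unfold s. repeat split; auto; lra. }
    lra. }
  destruct (Hi s) as [d [Hd Hs]].
  destruct (Happ d Hd) as [y [H1 [H2 H3]]].
  assert (y = s).
  { apply NNPP. intro Hne. apply (Hs y); auto. split.
    apply Rabs_pos_lt. lra. pose proof (Hlow y H1 H2). rewrite Rabs_right; lra. }
  subst y. exists s. auto.
Qed.

Lemma nxt_spec (f : R -> R) x : isol f -> (exists y, x < y /\ f y = 0) ->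
  x < nxt f x /\ f (nxt f x) = 0 /\ forall y, x < y -> f y = 0 -> nxt f x <= y.
Proof.
  intros Hi He. unfold nxt. apply epsilon_spec. apply nxt_ex; auto.
Qed.

Fixpoint zs (f : R -> R) (B : R) (i : nat) : R :=
  match i with O => nxt f B | S i => nxt f (zs f B i) end.

Definition mm (f : R -> R) (B : R) (i : nat) : nat :=
  epsilon (inhabits O) (fun m => zero_mult f (zs f B i) m).

Fixpoint MM (f : R -> R) (B : R) (i : nat) : nat :=
  match i with O => O | S i => (MM f B i + mm f B i)%nat end.

Fixpoint lg (f : R -> R) (B : R) (j i : nat) : nat :=
  match i with O => O | S i' => if Nat.leb (MM f B i) j then i else lg f B j i' end.

Definition idx f B j := lg f B j j.

Definition mu_of (f : R -> R) (B : R) (j : nat) : R := zs f B (idx f B j).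


Lemma zs_prop (f : R -> R) B : isol f -> (forall X, exists y, X < y /\ f y = 0) ->
  forall i, f (zs f B i) = 0 /\ zs f B i < zs f B (S i) /\
    (forall y, zs f B i < y -> f y = 0 -> zs f B (S i) <= y).
Proof.
  intros Hi Hu i. simpl.
  destruct (nxt_spec f (zs f B i) Hi (Hu _)) as [A [Bq C]].
  split; [|split; auto].
  destruct i; simpl; apply nxt_spec; auto.
Qed.

Lemma zs0 (f : R -> R) B : isol f -> (forall X, exists y, X < y /\ f y = 0) ->
  B < zs f B 0 /\ forall y, B < y -> f y = 0 -> zs f B 0 <= y.
Proof. intros Hi Hu. simpl. destruct (nxt_spec f B Hi (Hu _)) as [A [_ C]]; auto. Qed.

Lemma zs_mono (f : R -> R) B : isol f -> (forall X, exists y, X < y /\ f y = 0) ->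
  forall i j, (i < j)%nat -> zs f B i < zs f B j.
Proof.
  intros Hi Hu i j Hij. induction Hij.
  - apply zs_prop; auto.
  - eapply Rlt_trans; eauto. apply zs_prop; auto.
Qed.

Lemma zs_le (f : R -> R) B : isol f -> (forall X, exists y, X < y /\ f y = 0) ->
  forall i j, (i <= j)%nat -> zs f B i <= zs f B j.
Proof.
  intros Hi Hu i j Hij. destruct (Nat.eq_dec i j). subst; lra.
  left. apply zs_mono; auto; lia.
Qed.

Lemma zs_inj (f : R -> R) B : isol f -> (forall X, exists y, X < y /\ f y = 0) ->
  forall i j, zs f B i = zs f B j -> i = j.
Proof.
  intros Hi Hu i j E. destruct (Nat.lt_trichotomy i j) as [L|[L|L]]; auto;
  pose proof (zs_mono f B Hi Hu _ _ L); lra.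
Qed.

Lemma zs_unb (f : R -> R) B : isol f -> (forall X, exists y, X < y /\ f y = 0) ->
  forall X, exists i, X < zs f B i.
Proof.
  intros Hi Hu X. apply NNPP. intro C.
  assert (Hle : forall i, zs f B i <= X).
  { intro i. apply Rnot_lt_le. intro H. apply C. eauto. }
  set (E := fun y => exists i, y = zs f B i).
  assert (Hb : bound E). { exists X. intros y [i ->]. auto. }
  destruct (completeness E Hb (ex_intro _ (zs f B 0) (ex_intro _ 0%nat eq_refl))) as [L [Hub Hlub]].
  destruct (Hi L) as [d [Hd HL]].
  assert (exists i, L - d < zs f B i).
  { apply NNPP. intro C2. assert (L <= L - d). apply Hlub. intros y [i ->].
    apply Rnot_lt_le. intro; apply C2; eauto. lra. }
  destruct H as [i Hi1].
  assert (H1 : zs f B (S i) <= L) by (apply Hub; eexists; eauto).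
  assert (H2 : zs f B (S (S i)) <= L) by (apply Hub; eexists; eauto).
  pose proof (zs_mono f B Hi Hu i (S i) ltac:(lia)).
  pose proof (zs_mono f B Hi Hu (S i) (S (S i)) ltac:(lia)).
  apply (HL (zs f B (S i))). split. apply Rabs_pos_lt; lra.
  rewrite Rabs_left; lra. apply zs_prop; auto.
Qed.

Lemma zs_all (f : R -> R) B : isol f -> (forall X, exists y, X < y /\ f y = 0) ->
  (forall y, y <= B -> f y <> 0) ->
  forall x, f x = 0 -> exists i, x = zs f B i.
Proof.
  intros Hi Hu Hb x Hx. destruct (zs_unb f B Hi Hu x) as [i Hxi].
  induction i.
  - exfalso. destruct (zs0 f B Hi Hu) as [_ H].
    assert (B < x). { apply Rnot_le_lt. intro; eapply Hb; eauto. }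
    specialize (H x H0 Hx). lra.
  - destruct (Rtotal_order (zs f B i) x) as [L|[L|L]].
    + exfalso. destruct (zs_prop f B Hi Hu i) as [_ [_ H]]. specialize (H x L Hx). lra.
    + eauto.
    + apply IHi. auto.
Qed.

Lemma isol_of (f : R -> R) : continuity f -> (forall x, f x = 0 -> exists m, zero_mult f x m) -> isol f.
Proof.
  intros Hc Hm x. destruct (Req_dec (f x) 0) as [E|E].
  - destruct (Hm x E) as [m H]. eapply zm_isol; eauto.
  - apply cont_isol; auto.
Qed.

Lemma mm_spec (f : R -> R) B : continuity f -> (forall x, f x = 0 -> exists m, zero_mult f x m) ->
  (forall X, exists y, X < y /\ f y = 0) ->
  forall i, zero_mult f (zs f B i) (mm f B i) /\ (1 <= mm f B i)%nat.
Proof.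
  intros Hc Hm Hu i. pose proof (isol_of f Hc Hm) as Hi.
  assert (Z : f (zs f B i) = 0) by (apply zs_prop; auto).
  assert (H : zero_mult f (zs f B i) (mm f B i)).
  { unfold mm. apply epsilon_spec. apply Hm; auto. }
  split; auto. eapply zm_pos; eauto.
Qed.

Lemma lg_spec (f : R -> R) B (Hpos : forall i, (1 <= mm f B i)%nat) j :
  forall i, (MM f B (lg f B j i) <= j)%nat /\ (lg f B j i <= i)%nat /\
    (forall k, (lg f B j i < k <= i)%nat -> (j < MM f B k)%nat).
Proof.
  induction i.
  - simpl. split; [lia|split;[lia|]]. intros; lia.
  - change (lg f B j (S i)) with (if Nat.leb (MM f B (S i)) j then S i else lg f B j i).
    destruct (Nat.leb (MM f B (S i)) j) eqn:E.
    + apply Nat.leb_le in E. split; auto. split; [lia|]. intros; lia.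
    + apply Nat.leb_gt in E. destruct IHi as [A [Bq C]]. split; auto. split; [lia|].
      intros k Hk. destruct (Nat.eq_dec k (S i)). subst; auto. apply C; lia.
Qed.

Lemma MM_ge (f : R -> R) B (Hpos : forall i, (1 <= mm f B i)%nat) :
  forall i, (i <= MM f B i)%nat.
Proof. induction i; simpl; auto. specialize (Hpos i). lia. Qed.

Lemma MM_mono (f : R -> R) B (Hpos : forall i, (1 <= mm f B i)%nat) :
  forall i j, (i < j)%nat -> (MM f B i < MM f B j)%nat.
Proof.
  intros i j H. induction H; simpl; specialize (Hpos i); try specialize (Hpos m); lia.
Qed.

Lemma idx_spec (f : R -> R) B (Hpos : forall i, (1 <= mm f B i)%nat) j :
  (MM f B (idx f B j) <= j < MM f B (S (idx f B j)))%nat.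
Proof.
  unfold idx. destruct (lg_spec f B Hpos j j) as [A [Bq C]]. split; auto.
  destruct (Nat.eq_dec (lg f B j j) j) as [E|E].
  - rewrite E. pose proof (MM_ge f B Hpos (S j)). lia.
  - apply C. lia.
Qed.

Lemma idx_uniq (f : R -> R) B (Hpos : forall i, (1 <= mm f B i)%nat) j i :
  (MM f B i <= j < MM f B (S i))%nat -> idx f B j = i.
Proof.
  intros H. pose proof (idx_spec f B Hpos j).
  destruct (Nat.lt_trichotomy (idx f B j) i) as [L|[L|L]]; auto.
  - destruct (Nat.eq_dec (S (idx f B j)) i) as [e|e].
    + rewrite e in H0. lia.
    + pose proof (MM_mono f B Hpos (S (idx f B j)) i ltac:(lia)). lia.
  - destruct (Nat.eq_dec (S i) (idx f B j)) as [e|e].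
    + rewrite <- e in H0. lia.
    + pose proof (MM_mono f B Hpos (S i) (idx f B j) ltac:(lia)). lia.
Qed.

Lemma enum_exists (f : R -> R) B : continuity f ->
  (forall x, f x = 0 -> exists m, zero_mult f x m) ->
  (forall X, exists y, X < y /\ f y = 0) ->
  (forall y, y <= B -> f y <> 0) ->
  enum_zeros f (mu_of f B).
Proof.
  intros Hc Hm Hu Hb. pose proof (isol_of f Hc Hm) as Hi.
  assert (Hpos : forall i, (1 <= mm f B i)%nat) by (intro; apply mm_spec; auto).
  assert (Hblock : forall j i, mu_of f B j = zs f B i <-> (MM f B i <= j < MM f B i + mm f B i)%nat).
  { intros j i. unfold mu_of. split.
    - intro E. apply zs_inj in E; auto. rewrite <- E. pose proof (idx_spec f B Hpos j).
      simpl in H. lia.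
    - intro H. rewrite (idx_uniq f B Hpos j i). reflexivity. simpl; lia. }
  split.
  - intros i j Hij. unfold mu_of. apply zs_le; auto.
    pose proof (idx_spec f B Hpos i). pose proof (idx_spec f B Hpos j).
    destruct (Compare_dec.le_lt_dec (idx f B i) (idx f B j)); auto.
    pose proof (MM_mono f B Hpos (S (idx f B j)) (idx f B i)).
    destruct (Nat.eq_dec (S (idx f B j)) (idx f B i)) as [E|E].
    + rewrite E in H0. lia.
    + specialize (H1 ltac:(lia)). lia.
  - intros x m. destruct (Req_dec (f x) 0) as [Z|Z].
    + destruct (zs_all f B Hi Hu Hb x Z) as [i ->].
      destruct (mm_spec f B Hc Hm Hu i) as [Hz Hp].
      split.
      * intro H. rewrite <- (zm_unique _ _ _ _ Hz H). exists (MM f B i). intro j. apply Hblock.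
      * intros [j0 H].
        assert (A1 := proj2 (H (MM f B i))). assert (A2 := proj1 (Hblock (MM f B i) i)).
        assert (j0 = MM f B i /\ m = mm f B i).
        { assert (H1 : (j0 <= MM f B i < j0 + m)%nat).
          { rewrite <- H. apply Hblock. lia. }
          assert (H2 : (MM f B i <= j0)%nat).
          { assert (mu_of f B j0 = zs f B i) by (apply H; lia). apply Hblock in H0. lia. }
          assert (j0 = MM f B i) by lia. subst j0. split; auto.
          destruct (Nat.lt_trichotomy m (mm f B i)) as [L|[L|L]]; auto.
          - assert (mu_of f B (MM f B i + m) = zs f B i) by (apply Hblock; lia).
            apply H in H0. lia.
          - assert (mu_of f B (MM f B i + mm f B i) = zs f B i) by (apply H; lia).
            apply Hblock in H0. lia. }
        destruct H0 as [_ ->]. auto.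
    + assert (Hn : forall j, mu_of f B j <> x).
      { intros j E. apply Z. rewrite <- E. unfold mu_of. apply zs_prop; auto. }
      split.
      * intros H. destruct m. exists O. intro j. split; [intro E; exfalso; eapply Hn; eauto| lia].
        exfalso. apply Z. eapply zm_zero; eauto. lia.
      * intros [j0 H]. destruct m.
        -- exists f. split; auto. split; auto. intro y. simpl. ring.
        -- exfalso. apply (Hn j0). apply H. lia.
Qed.


Lemma cont_loc (f g : R -> R) x : (exists d, 0 < d /\ forall y, Rabs (y - x) < d -> f y = g y) ->
  continuity_pt g x -> continuity_pt f x.
Proof.
  intros [d [Hd H]] Hg. apply eps_cont. intros e He.
  destruct (cont_eps g x Hg e He) as [d' [Hd' H']].
  exists (Rmin d d'). split. apply Rmin_pos; auto.
  intros y Hy. rewrite (H y), (H x). apply H'.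
  eapply Rlt_le_trans; [exact Hy| apply Rmin_r].
  replace (x - x) with 0 by ring. rewrite Rabs_R0; auto.
  eapply Rlt_le_trans; [exact Hy| apply Rmin_l].
Qed.

Lemma paste (f h1 h2 : R -> R) a : (forall y, a <= y -> f y = h1 y) ->
  (forall y, y <= a -> f y = h2 y) -> continuity h1 -> continuity h2 -> continuity f.
Proof.
  intros H1 H2 C1 C2 x. destruct (Rtotal_order x a) as [L|[L|L]].
  - apply (cont_loc f h2 x); auto. exists (a - x). split. lra.
    intros y Hy. apply H2. apply Rabs_def2 in Hy. lra.
  - subst x. apply eps_cont. intros e He.
    destruct (cont_eps h1 a (C1 a) e He) as [d1 [Hd1 K1]].
    destruct (cont_eps h2 a (C2 a) e He) as [d2 [Hd2 K2]].
    exists (Rmin d1 d2). split. apply Rmin_pos; auto. intros y Hy.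
    destruct (Rle_dec a y).
    + rewrite (H1 y), (H1 a) by lra. apply K1. eapply Rlt_le_trans; [exact Hy| apply Rmin_l].
    + rewrite (H2 y), (H2 a) by lra. apply K2. eapply Rlt_le_trans; [exact Hy| apply Rmin_r].
  - apply (cont_loc f h1 x); auto. exists (x - a). split. lra.
    intros y Hy. apply H1. apply Rabs_def2 in Hy. lra.
Qed.

Lemma cont_sqrt_all : continuity sqrt.
Proof.
  intro x. destruct (Rle_dec 0 x). apply continuity_pt_sqrt; auto.
  apply (cont_loc sqrt (fun _ => 0) x). exists (- x). split. lra.
  intros y Hy. apply Rabs_def2 in Hy. apply sqrt_neg_0. lra.
  apply continuity_pt_const. intros a b; auto.
Qed.

Definition sinc (v : R) : R := if Req_EM_T v 0 then 1 else sin v / v.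
Definition sinhc (v : R) : R := if Req_EM_T v 0 then 1 else sinh v / v.

Lemma cont_quot_at0 (s : R -> R) (c : R -> R) :
  s 0 = 0 -> derivable_pt_lim s 0 1 ->
  (forall v, c v = if Req_EM_T v 0 then 1 else s v / v) ->
  (forall v, v <> 0 -> continuity_pt (fun v => s v / v) v) ->
  continuity c.
Proof.
  intros S0 Hd Hc Hcont x. destruct (Req_dec x 0) as [E|E].
  - subst x. apply eps_cont. intros e He. destruct (Hd e He) as [d Hdd].
    exists d. split. apply cond_pos. intros y Hy. rewrite !Hc.
    destruct (Req_EM_T 0 0) as [_|n]; [|congruence].
    destruct (Req_EM_T y 0) as [->|ny].
    + replace (1 - 1) with 0 by ring. rewrite Rabs_R0; auto.
    + specialize (Hdd y ny). rewrite Rminus_0_r in Hy. specialize (Hdd Hy).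
      rewrite Rplus_0_l, S0, Rminus_0_r in Hdd. auto.
  - apply (cont_loc c (fun v => s v / v) x); auto.
    exists (Rabs x). split. apply Rabs_pos_lt; auto. intros y Hy. rewrite Hc.
    destruct (Req_EM_T y 0) as [->|]; auto. exfalso. rewrite Rminus_0_l, Rabs_Ropp in Hy. lra.
Qed.

Lemma cont_sinc : continuity sinc.
Proof.
  apply (cont_quot_at0 sin sinc). apply sin_0. apply derivable_pt_lim_sin_0.
  intro; reflexivity. intros v Hv. apply continuity_pt_div; auto.
  apply continuity_sin. apply derivable_continuous_pt, derivable_pt_id.
Qed.

Lemma sinh_0 : sinh 0 = 0.
Proof. unfold sinh. rewrite Ropp_0. field. Qed.

Lemma cont_sinh : continuity sinh.
Proof. intro x. apply derivable_continuous_pt. exists (cosh x). apply derivable_pt_lim_sinh. Qed.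
Lemma cont_cosh : continuity cosh.
Proof. intro x. apply derivable_continuous_pt. exists (sinh x). apply derivable_pt_lim_cosh. Qed.

Lemma cont_sinhc : continuity sinhc.
Proof.
  apply (cont_quot_at0 sinh sinhc). apply sinh_0.
  pose proof (derivable_pt_lim_sinh 0). rewrite cosh_0 in H. exact H.
  intro; reflexivity. intros v Hv. apply continuity_pt_div; auto.
  apply cont_sinh. apply derivable_continuous_pt, derivable_pt_id.
Qed.

Lemma cont_cf x : continuity (fun l => cf l x).
Proof.
  apply (paste _ (fun l => cos (sqrt l * x)) (fun l => cosh (sqrt (- l) * x)) 0).
  - intros y Hy. unfold cf. destruct (Rle_dec 0 y); [auto|lra].
  - intros y Hy. unfold cf. destruct (Rle_dec 0 y); auto.
    assert (y = 0) by lra. subst. rewrite Ropp_0, sqrt_0, !Rmult_0_l, cos_0, cosh_0. auto.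
  - intro l. apply (continuity_pt_comp (fun l => sqrt l * x) cos).
    apply continuity_pt_mult. apply cont_sqrt_all. apply continuity_pt_const; intros a b; auto.
    apply continuity_cos.
  - intro l. apply (continuity_pt_comp (fun l => sqrt (- l) * x) cosh).
    apply continuity_pt_mult.
    apply (continuity_pt_comp Ropp sqrt). apply continuity_pt_opp, derivable_continuous_pt, derivable_pt_id.
    apply cont_sqrt_all. apply continuity_pt_const; intros a b; auto.
    apply cont_cosh.
Qed.

Lemma cont_sf x : continuity (fun l => sf l x).
Proof.
  apply (paste _ (fun l => x * sinc (sqrt l * x)) (fun l => x * sinhc (sqrt (- l) * x)) 0).
  - intros y Hy. unfold sf, sinc. destruct (Rlt_dec 0 y).
    + destruct (Req_EM_T (sqrt y * x) 0) as [E|E].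
      * assert (sqrt y > 0) by (apply sqrt_lt_R0; auto).
        assert (x = 0). { destruct (Rmult_integral _ _ E); auto; lra. }
        subst. rewrite Rmult_0_r, sin_0. field. lra.
      * assert (sqrt y > 0) by (apply sqrt_lt_R0; auto).
        assert (x <> 0) by (intro; subst; apply E; ring). field; split; auto; lra.
    + assert (y = 0) by lra. subst. destruct (Rlt_dec 0 0); [lra|].
      rewrite sqrt_0, Rmult_0_l. destruct (Req_EM_T 0 0); [ring|congruence].
  - intros y Hy. unfold sf, sinhc. destruct (Rlt_dec 0 y); [lra|]. destruct (Rlt_dec y 0).
    + assert (sqrt (- y) > 0) by (apply sqrt_lt_R0; lra).
      destruct (Req_EM_T (sqrt (- y) * x) 0) as [E|E].
      * assert (x = 0). { destruct (Rmult_integral _ _ E); auto; lra. }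
        subst. rewrite Rmult_0_r, sinh_0. field. lra.
      * assert (x <> 0) by (intro; subst; apply E; ring). field; split; auto; lra.
    + assert (y = 0) by lra. subst. rewrite Ropp_0, sqrt_0, Rmult_0_l.
      destruct (Req_EM_T 0 0); [ring|congruence].
  - intro l. apply continuity_pt_mult. apply continuity_pt_const; intros a b; auto.
    apply (continuity_pt_comp (fun l => sqrt l * x) sinc).
    apply continuity_pt_mult. apply cont_sqrt_all. apply continuity_pt_const; intros a b; auto.
    apply cont_sinc.
  - intro l. apply continuity_pt_mult. apply continuity_pt_const; intros a b; auto.
    apply (continuity_pt_comp (fun l => sqrt (- l) * x) sinhc).
    apply continuity_pt_mult.
    apply (continuity_pt_comp Ropp sqrt). apply continuity_pt_opp, derivable_continuous_pt, derivable_pt_id.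
    apply cont_sqrt_all. apply continuity_pt_const; intros a b; auto.
    apply cont_sinhc.
Qed.

Lemma cont_c (c : R) : continuity (fun _ : R => c).
Proof. intro; apply continuity_pt_const; intros a b; auto. Qed.

Lemma cont_Fh e : continuity (Fh e).
Proof.
  unfold Fh, phi1', theta1.
  repeat first [apply continuity_plus | apply continuity_minus | apply continuity_mult |
    apply continuity_div | apply cont_cf | apply cont_sf | apply cont_c]; intros; lra.
Qed.

Lemma cont_Fm e : continuity (Fm e).
Proof.
  unfold Fm, phi1', theta1.
  repeat first [apply continuity_plus | apply continuity_minus | apply continuity_mult |
    apply continuity_div | apply continuity_opp | apply cont_cf | apply cont_sf | apply cont_c]; intros; lra.
Qed.

Definition P (s1 s2 e l : R) : R := 3 * Fh e l - s1 - s2 * Fm e l.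

Lemma D_fact N e l : Dm_minus N 0 0 e l = P 1 1 e l * P 1 (-1) e l * P (-1) 1 e l * P (-1) (-1) e l.
Proof.
  unfold Dm_minus, xi, rho, ck, sk, P. simpl INR.
  replace (PI * 0 / INR N + 0) with 0 by (unfold Rdiv; ring).
  rewrite cos_0, sin_0. field.
Qed.

Lemma cont_P s1 s2 e : continuity (P s1 s2 e).
Proof.
  unfold P. apply continuity_minus. apply continuity_minus. apply continuity_mult.
  apply cont_c. apply cont_Fh. apply cont_c. apply continuity_mult. apply cont_c. apply cont_Fm.
Qed.

Lemma cont_D N e : continuity (Dm_minus N 0 0 e).
Proof.
  intro l. apply (cont_loc _ (fun l => P 1 1 e l * P 1 (-1) e l * P (-1) 1 e l * P (-1) (-1) e l)).
  exists 1. split. lra. intros; apply D_fact.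
  repeat apply continuity_pt_mult; apply cont_P.
Qed.

Lemma cf_pos k x : 0 < k -> cf (k * k) x = cos (k * x).
Proof.
  intro H. unfold cf. destruct (Rle_dec 0 (k*k)). rewrite sqrt_square; lra.
  exfalso. apply n. nra.
Qed.
Lemma sf_pos k x : 0 < k -> sf (k * k) x = sin (k * x) / k.
Proof.
  intro H. unfold sf. destruct (Rlt_dec 0 (k*k)). rewrite sqrt_square; lra.
  exfalso. apply n. nra.
Qed.
Lemma cf_neg k x : 0 < k -> cf (- (k * k)) x = cosh (k * x).
Proof.
  intro H. unfold cf. destruct (Rle_dec 0 (-(k*k))). exfalso; assert (k*k>0) by (apply Rmult_lt_0_compat; lra); lra.
  rewrite Ropp_involutive, sqrt_square; lra.
Qed.
Lemma sf_neg k x : 0 < k -> sf (- (k * k)) x = sinh (k * x) / k.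
Proof.
  intro H. unfold sf. destruct (Rlt_dec 0 (-(k*k))). exfalso; assert (k*k>0) by (apply Rmult_lt_0_compat; lra); lra.
  destruct (Rlt_dec (-(k*k)) 0). rewrite Ropp_involutive, sqrt_square; lra.
  exfalso; assert (k*k>0) by (apply Rmult_lt_0_compat; lra); lra.
Qed.

Lemma sinh_plus a b : sinh (a + b) = sinh a * cosh b + cosh a * sinh b.
Proof.
  unfold sinh, cosh. rewrite Ropp_plus_distr, !exp_plus. field.
Qed.
Lemma sinh_minus a b : sinh (a - b) = sinh a * cosh b - cosh a * sinh b.
Proof.
  unfold sinh, cosh, Rminus. rewrite Ropp_plus_distr, Ropp_involutive, !exp_plus. field.
Qed.

Lemma Fh_pos e k : 0 < e -> 0 < k -> Fh e (k * k) = cos k + sin k / (2 * e * k).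
Proof.
  intros He Hk. unfold Fh, phi1', theta1. rewrite !cf_pos, !sf_pos by auto.
  replace (sin k) with (sin (k * t0 e + k * (1 - t0 e))) by (f_equal; ring).
  rewrite sin_plus. rewrite Rmult_1_r. field. lra.
Qed.

Lemma Fm_pos e k : 0 < e -> 0 < k -> Fm e (k * k) = sin (4 * e * k) / (2 * e * k).
Proof.
  intros He Hk. unfold Fm, phi1', theta1. rewrite !cf_pos, !sf_pos by auto.
  replace (4 * e * k) with (k * t0 e - k * (1 - t0 e)) by (unfold t0; field).
  rewrite sin_minus. field. lra.
Qed.

Lemma Fh_neg e k : 0 < e -> 0 < k -> Fh e (- (k * k)) = cosh k + sinh k / (2 * e * k).
Proof.
  intros He Hk. unfold Fh, phi1', theta1. rewrite !cf_neg, !sf_neg by auto.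
  replace (sinh k) with (sinh (k * t0 e + k * (1 - t0 e))) by (f_equal; ring).
  rewrite sinh_plus. rewrite Rmult_1_r. field. lra.
Qed.

Lemma Fm_neg e k : 0 < e -> 0 < k -> Fm e (- (k * k)) = sinh (4 * e * k) / (2 * e * k).
Proof.
  intros He Hk. unfold Fm, phi1', theta1. rewrite !cf_neg, !sf_neg by auto.
  replace (4 * e * k) with (k * t0 e - k * (1 - t0 e)) by (unfold t0; field).
  rewrite sinh_minus. field. lra.
Qed.

Lemma cf_0 x : cf 0 x = 1.
Proof. unfold cf. destruct (Rle_dec 0 0); [|lra]. rewrite sqrt_0, Rmult_0_l, cos_0; auto. Qed.
Lemma sf_0 x : sf 0 x = x.
Proof. unfold sf. destruct (Rlt_dec 0 0); [lra|]. destruct (Rlt_dec 0 0); [lra|auto]. Qed.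

Lemma Fh_0 e : 0 < e -> Fh e 0 = 1 + 1 / (2 * e).
Proof. intros. unfold Fh, phi1', theta1. rewrite !cf_0, !sf_0. field. lra. Qed.
Lemma Fm_0 e : 0 < e -> Fm e 0 = 2.
Proof. intros. unfold Fm, phi1', theta1. rewrite !cf_0, !sf_0. unfold t0. field. lra. Qed.


Lemma is_derive_eq (f : R -> R) x l l' : is_derive f x l -> l = l' -> is_derive f x l'.
Proof. intros H ->; auto. Qed.

Lemma deriv_cont (f : R -> R) x l : is_derive f x l -> continuity_pt f x.
Proof.
  intro H. apply continuity_pt_filterlim. apply (ex_derive_continuous (K:=R_AbsRing) (V:=R_NormedModule) f x). exists l; auto.
Qed.

Lemma pow_le_abs a b m : Rabs a <= Rabs b -> Rabs a ^ m <= Rabs b ^ m.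
Proof. intro H. apply pow_incr. split; auto. apply Rabs_pos. Qed.

Lemma taylor_chain (f : nat -> R -> R) x0 :
  (forall j k, is_derive (f j) k (f (S j) k)) ->
  forall m, (forall j, (j < m)%nat -> f j x0 = 0) ->
  forall e, 0 < e -> exists d, 0 < d /\ forall k, Rabs (k - x0) < d ->
    Rabs (f O k - f m x0 / INR (Factorial.fact m) * (k - x0) ^ m) <= e * Rabs (k - x0) ^ m.
Proof.
  intros Hd m. revert f Hd. induction m; intros f Hd Hz e He.
  - destruct (cont_eps (f O) x0 (deriv_cont _ _ _ (Hd O x0)) e He) as [d [Hd0 H]].
    exists d. split; auto. intros k Hk. simpl. 
    replace (f 0%nat k - f 0%nat x0 / 1 * 1) with (f 0%nat k - f 0%nat x0) by field.
    rewrite Rmult_1_r. left. auto.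
  - destruct (IHm (fun j => f (S j)) (fun j k => Hd (S j) k)) with (e := e) as [d [Hd0 H]]; auto.
    { intros j Hj. apply Hz. lia. }
    exists d. split; auto. intros k Hk.
    set (L := f (S m) x0 / INR (Factorial.fact (S m))).
    set (h := fun t => f O t - L * (t - x0) ^ S m).
    set (dh := fun t => f 1%nat t - f (S m) x0 / INR (Factorial.fact m) * (t - x0) ^ m).
    assert (Hdh : forall t, is_derive h t (dh t)).
    { intro t. unfold h, dh. apply (is_derive_minus (fun t => f O t) (fun t => L * (t - x0) ^ S m)).
      apply Hd. eapply is_derive_eq. apply is_derive_scal. apply is_derive_pow.
      apply (is_derive_minus (fun t => t) (fun _ => x0)). apply is_derive_id. apply is_derive_const.
      unfold L. simpl pred. rewrite fact_simpl, mult_INR, S_INR.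
      unfold minus, plus, opp, one, zero; simpl. field.
      split; [apply INR_fact_neq_0|]. pose proof (pos_INR m). lra. }
    destruct (MVT_gen h x0 k dh) as [c [Hc Hm]].
    { intros; apply Hdh. }
    { intros; apply (deriv_cont _ _ _ (Hdh x)). }
    assert (Hh0 : h x0 = 0). { unfold h. rewrite Hz by lia. simpl. ring. }
    rewrite Hh0, Rminus_0_r in Hm. unfold h in Hm. fold L. rewrite Hm.
    assert (Hck : Rabs (c - x0) <= Rabs (k - x0)).
    { unfold Rmin, Rmax in Hc. destruct (Rle_dec x0 k) as [r|r].
      - rewrite (Rabs_pos_eq (c - x0)) by lra. rewrite (Rabs_pos_eq (k - x0)) by lra. lra.
      - rewrite (Rabs_left1 (c - x0)) by lra. rewrite (Rabs_left1 (k - x0)) by lra. lra. }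
    assert (Hcd : Rabs (c - x0) < d) by lra.
    specialize (H c Hcd). unfold dh. rewrite Rabs_mult.
    simpl pow. rewrite (Rmult_comm (Rabs (k - x0))), <- Rmult_assoc.
    apply Rmult_le_compat_r. apply Rabs_pos.
    eapply Rle_trans. apply H. apply Rmult_le_compat_l. lra. apply pow_le_abs. auto.
Qed.

Lemma chain_zm (f : nat -> R -> R) x0 m :
  (forall j k, is_derive (f j) k (f (S j) k)) ->
  (forall j, (j < m)%nat -> f j x0 = 0) -> f m x0 <> 0 ->
  zero_mult (f O) x0 m.
Proof.
  intros Hd Hz Hm.
  set (L := f m x0 / INR (Factorial.fact m)).
  set (G := fun k => if Req_EM_T k x0 then L else f O k / (k - x0) ^ m).
  assert (HL : L <> 0). { unfold L. unfold Rdiv. apply Rmult_integral_contrapositive.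
    split; auto. apply Rinv_neq_0_compat, INR_fact_neq_0. }
  exists G. split; [|split].
  - intro x. destruct (Req_dec x x0) as [->|Hne].
    + apply eps_cont. intros e He.
      destruct (taylor_chain f x0 Hd m Hz (e/2) ltac:(lra)) as [d [Hd0 H]].
      exists d. split; auto. intros y Hy. unfold G.
      destruct (Req_EM_T x0 x0) as [_|n]; [|congruence].
      destruct (Req_EM_T y x0) as [->|ny].
      * replace (L - L) with 0 by ring. rewrite Rabs_R0; auto.
      * specialize (H y Hy). fold L in H.
        assert (Hp : 0 < Rabs (y - x0) ^ m). { apply pow_lt. apply Rabs_pos_lt. lra. }
        replace (f 0%nat y / (y - x0) ^ m - L) with ((f 0%nat y - L * (y - x0) ^ m) / (y - x0) ^ m).
        2:{ field. apply pow_nonzero. lra. }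
        rewrite Rabs_div, <- RPow_abs by (apply pow_nonzero; lra).
        apply (Rmult_lt_reg_r (Rabs (y - x0) ^ m)); auto.
        unfold Rdiv. rewrite Rmult_assoc, Rinv_l by lra. assert (e / 2 * Rabs (y - x0) ^ m < e * Rabs (y - x0) ^ m) by (apply Rmult_lt_compat_r; lra). lra.
    + apply (cont_loc G (fun k => f O k / (k - x0) ^ m)).
      * exists (Rabs (x - x0)). split. apply Rabs_pos_lt; lra.
        intros y Hy. unfold G. destruct (Req_EM_T y x0) as [->|]; auto.
        exfalso. rewrite Rabs_minus_sym in Hy. lra.
      * apply continuity_pt_div. apply (deriv_cont _ _ _ (Hd O x)). apply cont_powx.
        apply pow_nonzero. lra.
  - intro y. unfold G. destruct (Req_EM_T y x0) as [->|ny].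
    + destruct m. unfold L. simpl. field. rewrite Hz by lia.
      replace (x0 - x0) with 0 by ring. simpl. ring.
    + field. apply pow_nonzero. lra.
  - unfold G. destruct (Req_EM_T x0 x0); [auto|congruence].
Qed.

Lemma zm_mult (f g : R -> R) x a b : zero_mult f x a -> zero_mult g x b ->
  zero_mult (fun y => f y * g y) x (a + b).
Proof.
  intros [F [HF [Hf HFx]]] [G [HG [Hg HGx]]]. exists (fun y => F y * G y).
  split; [|split].
  - apply continuity_mult; auto.
  - intro y. rewrite Hf, Hg, pow_add. ring.
  - apply Rmult_integral_contrapositive; auto.
Qed.

Lemma cont_pow_comp (h : R -> R) m x : continuity_pt h x -> continuity_pt (fun y => h y ^ m) x.
Proof.
  intro H. induction m; simpl.
  - apply continuity_pt_const. intros a b; auto.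
  - apply continuity_pt_mult; auto.
Qed.

Lemma zm_sq (f Q : R -> R) l0 m : continuity f -> 0 < l0 -> zero_mult Q (sqrt l0) m ->
  (forall k, 0 < k -> f (k * k) = Q k / k ^ 4) -> zero_mult f l0 m.
Proof.
  intros Hf Hl [GQ [HG [HQ HG0]]] Hfk.
  set (k0 := sqrt l0) in *.
  assert (Hk0 : 0 < k0) by (apply sqrt_lt_R0; auto).
  assert (Hl0 : l0 = k0 * k0) by (unfold k0; rewrite sqrt_sqrt; lra).
  set (g := fun l => if Req_EM_T l l0 then GQ k0 / ((2 * k0) ^ m * k0 ^ 4) else f l / (l - l0) ^ m).
  exists g. split; [|split].
  - intro x. destruct (Req_dec x l0) as [->|Hne].
    + apply (cont_loc g (fun l => GQ (sqrt l) / ((sqrt l + k0) ^ m * sqrt l ^ 4))).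
      * exists l0. split; auto. intros y Hy. apply Rabs_def2 in Hy.
        unfold g. destruct (Req_EM_T y l0) as [->|ny].
        -- fold k0. f_equal. f_equal. f_equal. ring.
        -- assert (Hk : 0 < sqrt y) by (apply sqrt_lt_R0; lra).
           assert (Hy' : y = sqrt y * sqrt y) by (rewrite sqrt_sqrt; lra).
           assert (Hkk : sqrt y <> k0). { intro E. apply ny. rewrite Hy', Hl0, E. auto. }
           set (s := sqrt y) in *. fold k0 in HQ.
           rewrite Hy' at 1. rewrite Hfk, HQ by auto. rewrite Hy', Hl0.
           replace (s * s - k0 * k0) with ((s - k0) * (s + k0)) by ring.
           rewrite Rpow_mult_distr. field. repeat split; try apply pow_nonzero; lra.
      * apply continuity_pt_div.
        -- apply (continuity_pt_comp sqrt GQ). apply cont_sqrt_all. apply HG.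
        -- apply continuity_pt_mult. apply cont_pow_comp. apply continuity_pt_plus.
           apply cont_sqrt_all. apply continuity_pt_const; intros a b; auto.
           apply cont_pow_comp. apply cont_sqrt_all.
        -- fold k0. apply Rmult_integral_contrapositive. split; apply pow_nonzero; lra.
    + apply (cont_loc g (fun l => f l / (l - l0) ^ m)).
      * exists (Rabs (x - l0)). split. apply Rabs_pos_lt; lra.
        intros y Hy. unfold g. destruct (Req_EM_T y l0) as [->|]; auto.
        exfalso. rewrite Rabs_minus_sym in Hy. lra.
      * apply continuity_pt_div. apply Hf. apply cont_powx. apply pow_nonzero. lra.
  - intro y. unfold g. destruct (Req_EM_T y l0) as [->|ny].
    + rewrite Hl0 at 1. rewrite Hfk, HQ by auto. replace (k0 - k0) with 0 by ring.
      replace (l0 - l0) with 0 by ring.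
      destruct m; simpl. field. lra. rewrite !Rmult_0_l. unfold Rdiv. ring.
    + field. apply pow_nonzero. lra.
  - unfold g. destruct (Req_EM_T l0 l0) as [_|n]; [|congruence].
    unfold Rdiv. apply Rmult_integral_contrapositive. split; auto.
    apply Rinv_neq_0_compat. apply Rmult_integral_contrapositive. split; apply pow_nonzero; lra.
Qed.


Fixpoint cs (j : nat) (x : R) : R := match j with O => cos x | S j' => - sn j' x end
with sn (j : nat) (x : R) : R := match j with O => sin x | S j' => cs j' x end.

Lemma d_cs_sn j x : is_derive (cs j) x (cs (S j) x) /\ is_derive (sn j) x (sn (S j) x).
Proof.
  revert x. induction j; intro x.
  - split. apply is_derive_cos. apply is_derive_sin.
  - split.
    + change (cs (S j)) with (fun x => - sn j x). apply (is_derive_opp (fun x => sn j x)). apply IHj.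
    + change (sn (S j)) with (cs j). apply IHj.
Qed.

Definition lin (j : nat) (k : R) : R := match j with O => k | 1%nat => 1 | _ => 0 end.

Lemma d_lin j x : is_derive (lin j) x (lin (S j) x).
Proof.
  destruct j as [|[|j]]; cbv [lin].
  - apply (is_derive_id (K:=R_AbsRing)).
  - apply (is_derive_const (K:=R_AbsRing) (V:=R_NormedModule)).
  - apply (is_derive_const (K:=R_AbsRing) (V:=R_NormedModule)).
Qed.


Lemma d_mult (f g : R -> R) x df dg : is_derive f x df -> is_derive g x dg ->
  is_derive (fun t => f t * g t) x (df * g x + f x * dg).
Proof. intros. apply (is_derive_mult f g); auto. intros; apply Rmult_comm. Qed.
Lemma d_plus (f g : R -> R) x df dg : is_derive f x df -> is_derive g x dg ->
  is_derive (fun t => f t + g t) x (df + dg).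
Proof. intros. apply (is_derive_plus f g); auto. Qed.
Lemma d_minus (f g : R -> R) x df dg : is_derive f x df -> is_derive g x dg ->
  is_derive (fun t => f t - g t) x (df - dg).
Proof. intros. apply (is_derive_minus f g); auto. Qed.
Lemma d_scal (f : R -> R) c x df : is_derive f x df -> is_derive (fun t => c * f t) x (c * df).
Proof. intros. apply is_derive_scal; auto. Qed.
Lemma d_id x : is_derive (fun t : R => t) x 1.
Proof. apply (is_derive_id (K:=R_AbsRing)). Qed.
Lemma d_const (c : R) x : is_derive (fun _ : R => c) x 0.
Proof. apply (is_derive_const (K:=R_AbsRing) (V:=R_NormedModule)). Qed.
Lemma d_lin_comp (f : R -> R) a x df : is_derive f (a * x) df -> is_derive (fun t => f (a * t)) x (a * df).
Proof.
  intros H. apply (is_derive_comp f (fun t => a * t)); auto.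
  apply (is_derive_eq _ _ (a * 1)). apply (d_scal (fun t => t)). apply d_id. apply Rmult_1_r.
Qed.

Ltac rring := match goal with |- @eq _ ?a ?b => change (@eq R a b); ring end.

Definition Qd (s1 s2 e : R) (j : nat) (k : R) : R :=
  3 * (k * cs j k + INR j * cs (pred j) k) + 3 / (2 * e) * sn j k - s1 * lin j k
  - s2 / (2 * e) * (4 * e) ^ j * sn j (4 * e * k).

Lemma d_Qd s1 s2 e j k : is_derive (Qd s1 s2 e j) k (Qd s1 s2 e (S j) k).
Proof.
  unfold Qd.
  assert (H1 : is_derive (fun k => k * cs j k + INR j * cs (pred j) k) k
                 (k * cs (S j) k + INR (S j) * cs (pred (S j)) k)).
  { apply (is_derive_eq _ _ ((1 * cs j k + k * cs (S j) k) + INR j * cs (S (pred j)) k)).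
    apply (d_plus (fun k => k * cs j k) (fun k => INR j * cs (pred j) k)).
    apply (d_mult (fun k => k) (cs j)). apply d_id. apply d_cs_sn.
    apply (d_scal (cs (pred j))). apply d_cs_sn.
    destruct j; simpl pred; rewrite ?S_INR; simpl INR; rring. }
  assert (H2 : is_derive (fun k => sn j (4 * e * k)) k ((4 * e) * sn (S j) (4 * e * k))).
  { apply d_lin_comp. apply d_cs_sn. }
  apply (is_derive_eq _ _ (3 * (k * cs (S j) k + INR (S j) * cs (pred (S j)) k) + 3 / (2 * e) * sn (S j) k - s1 * lin (S j) k
     - s2 / (2 * e) * (4 * e) ^ j * ((4 * e) * sn (S j) (4 * e * k)))).
  apply (d_minus (fun k => 3 * (k * cs j k + INR j * cs (pred j) k) + 3 / (2 * e) * sn j k - s1 * lin j k)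
     (fun k => s2 / (2 * e) * (4 * e) ^ j * sn j (4 * e * k))).
  apply (d_minus (fun k => 3 * (k * cs j k + INR j * cs (pred j) k) + 3 / (2 * e) * sn j k)
     (fun k => s1 * lin j k)).
  apply (d_plus (fun k => 3 * (k * cs j k + INR j * cs (pred j) k)) (fun k => 3 / (2 * e) * sn j k)).
  apply (d_scal (fun k => k * cs j k + INR j * cs (pred j) k)). exact H1.
  apply (d_scal (sn j)). apply d_cs_sn.
  apply (d_scal (lin j)). apply d_lin.
  apply (d_scal (fun k => sn j (4 * e * k))). exact H2.
  simpl pow. rring.
Qed.

Definition Qs (s1 s2 e k : R) : R :=
  3 * k * cos k + 3 / (2 * e) * sin k - s1 * k - s2 / (2 * e) * sin (4 * e * k).

Lemma Qd0 s1 s2 e k : Qd s1 s2 e 0 k = Qs s1 s2 e k.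
Proof. unfold Qd, Qs. simpl. ring. Qed.

Lemma Qd1 s1 s2 e k : 0 < e -> Qd s1 s2 e 1 k = (3 + 3 / (2 * e)) * cos k - 3 * k * sin k - s1 - 2 * s2 * cos (4 * e * k).
Proof. intro. unfold Qd. simpl. field. lra. Qed.

Lemma Tid s1 s2 e k : Qd s1 s2 e 6 k + 2 * Qd s1 s2 e 4 k + Qd s1 s2 e 2 k =
  s2 / (2 * e) * (4 * e) ^ 2 * (1 - (4 * e) ^ 2) ^ 2 * sin (4 * e * k).
Proof. unfold Qd. simpl. ring. Qed.

Lemma Tid' s1 s2 e k : Qd s1 s2 e 7 k + 2 * Qd s1 s2 e 5 k + Qd s1 s2 e 3 k =
  s2 / (2 * e) * (4 * e) ^ 3 * (1 - (4 * e) ^ 2) ^ 2 * cos (4 * e * k).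
Proof. unfold Qd. simpl. ring. Qed.

Lemma least_nz (p : nat -> Prop) n : ~ p n -> exists m, (forall j, (j < m)%nat -> p j) /\ ~ p m.
Proof.
  induction n as [n IH] using (well_founded_induction Wf_nat.lt_wf). intro Hn.
  destruct (classic (forall j, (j < n)%nat -> p j)) as [H|H].
  - exists n; auto.
  - apply not_all_ex_not in H. destruct H as [j Hj].
    apply imply_to_and in Hj. destruct Hj as [Hj1 Hj2]. apply (IH j); auto.
Qed.

Lemma Q_order s1 s2 e k : s2 <> 0 -> 0 < e < 1/4 ->
  exists m, (forall j, (j < m)%nat -> Qd s1 s2 e j k = 0) /\ Qd s1 s2 e m k <> 0.
Proof.
  intros Hs He.
  assert (exists n, Qd s1 s2 e n k <> 0).
  { apply NNPP. intro C.
    assert (Z : forall n, Qd s1 s2 e n k = 0).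
    { intro n. apply NNPP. intro; apply C; eauto. }
    pose proof (Tid s1 s2 e k). pose proof (Tid' s1 s2 e k). rewrite !Z in H, H0.
    assert (a1 : s2 / (2 * e) <> 0).
    { unfold Rdiv. apply Rmult_integral_contrapositive. split; auto. apply Rinv_neq_0_compat. lra. }
    assert (a2 : 4 * e <> 0) by lra.
    assert (a3 : 1 - (4 * e) ^ 2 <> 0).
    { assert (0 < 4 * e < 1) by lra. assert ((4 * e) ^ 2 < 1). simpl. nra. lra. }
    assert (c1 : s2 / (2 * e) * (4 * e) ^ 2 * (1 - (4 * e) ^ 2) ^ 2 <> 0).
    { apply Rmult_integral_contrapositive; split; [apply Rmult_integral_contrapositive; split; [auto| apply pow_nonzero; auto] | apply pow_nonzero; auto]. }
    assert (c2 : s2 / (2 * e) * (4 * e) ^ 3 * (1 - (4 * e) ^ 2) ^ 2 <> 0).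
    { apply Rmult_integral_contrapositive; split; [apply Rmult_integral_contrapositive; split; [auto| apply pow_nonzero; auto] | apply pow_nonzero; auto]. }
    assert (sin (4 * e * k) = 0).
    { apply (Rmult_eq_reg_l (s2 / (2 * e) * (4 * e) ^ 2 * (1 - (4 * e) ^ 2) ^ 2)); auto.
      rewrite Rmult_0_r, <- H. ring. }
    assert (cos (4 * e * k) = 0).
    { apply (Rmult_eq_reg_l (s2 / (2 * e) * (4 * e) ^ 3 * (1 - (4 * e) ^ 2) ^ 2)); auto.
      rewrite Rmult_0_r, <- H0. ring. }
    apply (cos_sin_0 (4 * e * k)). auto. }
  destruct H as [n Hn]. apply (least_nz (fun j => Qd s1 s2 e j k = 0) n Hn).
Qed.

Lemma Q_zm s1 s2 e k m : (forall j, (j < m)%nat -> Qd s1 s2 e j k = 0) -> Qd s1 s2 e m k <> 0 ->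
  zero_mult (Qs s1 s2 e) k m.
Proof.
  intros H1 H2.
  assert (zero_mult (Qd s1 s2 e 0) k m) by (apply chain_zm; auto; intros; apply d_Qd).
  destruct H as [g [Hg [Hf Hx]]]. exists g. split; auto. split; auto.
  intro y. rewrite <- Qd0. auto.
Qed.

Lemma P_Q s1 s2 e k : 0 < e -> 0 < k -> P s1 s2 e (k * k) = Qs s1 s2 e k / k.
Proof.
  intros He Hk. unfold P, Qs. rewrite Fh_pos, Fm_pos by auto. field. lra.
Qed.

Definition Qprod e k := Qs 1 1 e k * Qs 1 (-1) e k * Qs (-1) 1 e k * Qs (-1) (-1) e k.

Lemma D_Q N e k : 0 < e -> 0 < k -> Dm_minus N 0 0 e (k * k) = Qprod e k / k ^ 4.
Proof.
  intros He Hk. rewrite D_fact, !P_Q by auto. unfold Qprod. field. lra.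
Qed.

Lemma D_zm N e l0 m1 m2 m3 m4 : 0 < e -> 0 < l0 ->
  zero_mult (Qs 1 1 e) (sqrt l0) m1 -> zero_mult (Qs 1 (-1) e) (sqrt l0) m2 ->
  zero_mult (Qs (-1) 1 e) (sqrt l0) m3 -> zero_mult (Qs (-1) (-1) e) (sqrt l0) m4 ->
  zero_mult (Dm_minus N 0 0 e) l0 (m1 + m2 + m3 + m4).
Proof.
  intros He Hl H1 H2 H3 H4. apply (zm_sq _ (Qprod e)); auto.
  apply cont_D.
  unfold Qprod. repeat apply zm_mult; auto.
  intros k Hk. apply D_Q; auto.
Qed.


Lemma sinh_mono a b : a <= b -> sinh a <= sinh b.
Proof.
  intro H. unfold sinh. destruct (Req_dec a b) as [->|n]; [lra|].
  pose proof (exp_increasing a b ltac:(lra)). pose proof (exp_increasing (-b) (-a) ltac:(lra)). lra.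
Qed.
Lemma sinh_pos a : 0 < a -> 0 < sinh a.
Proof. intro H. pose proof (sinh_mono 0 a ltac:(lra)). unfold sinh in *.
  pose proof (exp_increasing (-a) a ltac:(lra)). lra. Qed.
Lemma cosh_ge1 a : 1 <= cosh a.
Proof. unfold cosh. pose proof (exp_ineq1_le a). pose proof (exp_ineq1_le (-a)). lra. Qed.

Definition sgn (s : R) := s = 1 \/ s = -1.

Lemma P_pos_nonpos s1 s2 e l : 0 < e < 1/4 -> l <= 0 -> sgn s1 -> sgn s2 -> 0 < P s1 s2 e l.
Proof.
  intros He Hl H1 H2. unfold P. destruct (Req_dec l 0) as [->|Hn].
  - rewrite Fh_0, Fm_0 by lra.
    assert (1 / (2 * e) > 2). { apply (Rmult_lt_reg_r (2 * e)). lra. field_simplify; lra. }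
    destruct H1 as [->| ->]; destruct H2 as [->| ->]; lra.
  - set (k := sqrt (- l)). assert (Hk : 0 < k) by (apply sqrt_lt_R0; lra).
    assert (Hl' : l = - (k * k)) by (unfold k; rewrite sqrt_sqrt; lra).
    rewrite Hl', Fh_neg, Fm_neg by lra.
    assert (A1 : 0 < sinh (4 * e * k)) by (apply sinh_pos; nra).
    assert (A2 : sinh (4 * e * k) <= sinh k) by (apply sinh_mono; nra).
    assert (A3 := cosh_ge1 k).
    assert (A4 : 0 < 2 * e * k) by nra.
    assert (A5 : sinh (4 * e * k) / (2 * e * k) <= sinh k / (2 * e * k)).
    { unfold Rdiv. apply Rmult_le_compat_r; auto. left; apply Rinv_0_lt_compat; auto. }
    assert (A6 : 0 < sinh (4 * e * k) / (2 * e * k)) by (apply Rdiv_lt_0_compat; auto).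
    destruct H1 as [->| ->]; destruct H2 as [->| ->]; lra.
Qed.

Lemma sgn1 : sgn 1. Proof. left; auto. Qed.
Lemma sgnm1 : sgn (-1). Proof. right; auto. Qed.

Lemma D_nz_nonpos N e l : 0 < e < 1/4 -> l <= 0 -> Dm_minus N 0 0 e l <> 0.
Proof.
  intros He Hl. rewrite D_fact.
  pose proof (P_pos_nonpos 1 1 e l He Hl sgn1 sgn1).
  pose proof (P_pos_nonpos 1 (-1) e l He Hl sgn1 sgnm1).
  pose proof (P_pos_nonpos (-1) 1 e l He Hl sgnm1 sgn1).
  pose proof (P_pos_nonpos (-1) (-1) e l He Hl sgnm1 sgnm1).
  apply Rgt_not_eq. repeat apply Rmult_lt_0_compat; auto.
Qed.

Lemma Qs_zm_ex s1 s2 e k : s2 <> 0 -> 0 < e < 1/4 -> exists m, zero_mult (Qs s1 s2 e) k m.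
Proof.
  intros Hs He. destruct (Q_order s1 s2 e k Hs He) as [m [H1 H2]]. exists m. apply Q_zm; auto.
Qed.

Lemma D_Hm N e : 0 < e < 1/4 -> forall l, Dm_minus N 0 0 e l = 0 -> exists m, zero_mult (Dm_minus N 0 0 e) l m.
Proof.
  intros He l Hl. destruct (Rle_dec l 0) as [L|L].
  - exfalso. eapply D_nz_nonpos; eauto.
  - destruct (Qs_zm_ex 1 1 e (sqrt l) ltac:(lra) He) as [m1 H1].
    destruct (Qs_zm_ex 1 (-1) e (sqrt l) ltac:(lra) He) as [m2 H2].
    destruct (Qs_zm_ex (-1) 1 e (sqrt l) ltac:(lra) He) as [m3 H3].
    destruct (Qs_zm_ex (-1) (-1) e (sqrt l) ltac:(lra) He) as [m4 H4].
    exists (m1 + m2 + m3 + m4)%nat. apply D_zm; auto; lra.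
Qed.

Lemma ivt_strict (f : R -> R) x y : continuity f -> x < y -> f x * f y < 0 ->
  exists z, x < z < y /\ f z = 0.
Proof.
  intros Hc Hxy Hs. destruct (Rlt_dec (f x) 0) as [L|L].
  - assert (0 < f y) by nra. destruct (IVT f x y Hc Hxy L H) as [z [Hz Hfz]].
    exists z. split; auto. split.
    + destruct (Req_dec x z); [subst; lra|lra].
    + destruct (Req_dec z y); [subst; lra|lra].
  - apply Rnot_lt_le in L. assert (f x > 0). { destruct L; auto. rewrite <- H in Hs. lra. } assert (f y < 0) by nra.
    destruct (IVT (fun t => - f t) x y) as [z [Hz Hfz]].
    + apply continuity_opp; auto.
    + auto.
    + lra.
    + lra.
    + exists z. split; [|lra]. split.
      * destruct (Req_dec x z); [subst; lra|lra].
      * destruct (Req_dec z y); [subst; lra|lra].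
Qed.

Lemma cont_Qs s1 s2 e : continuity (Qs s1 s2 e).
Proof.
  intro k. apply (cont_loc _ (Qd s1 s2 e 0)). exists 1. split. lra. intros; rewrite Qd0; auto.
  apply (deriv_cont _ _ _ (d_Qd s1 s2 e 0 k)).
Qed.

Lemma cos_sin_pn n : cos (INR n * PI) ^ 2 = 1 /\ sin (INR n * PI) = 0 /\
  cos (INR (S n) * PI) = - cos (INR n * PI).
Proof.
  induction n.
  - simpl INR. rewrite Rmult_0_l, cos_0, sin_0, Rmult_1_l, cos_PI. repeat split; ring.
  - destruct IHn as [A [Bq Cq]].
    replace (INR (S n) * PI) with (INR n * PI + PI) by (rewrite S_INR; ring).
    replace (INR (S (S n)) * PI) with (INR n * PI + PI + PI) by (rewrite !S_INR; ring).
    rewrite !neg_cos, neg_sin, Bq. split. rewrite <- A. ring. split; ring.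
Qed.

Lemma D_zero_of_Qs N e k s1 s2 : 0 < e -> 0 < k -> sgn s1 -> sgn s2 -> Qs s1 s2 e k = 0 ->
  Dm_minus N 0 0 e (k * k) = 0.
Proof.
  intros He Hk H1 H2 H. rewrite D_Q by auto. unfold Qprod.
  destruct H1 as [->| ->]; destruct H2 as [->| ->]; rewrite H; unfold Rdiv; ring.
Qed.

Lemma D_Hu N e : 0 < e < 1/4 -> forall X, exists y, X < y /\ Dm_minus N 0 0 e y = 0.
Proof.
  intros He X.
  destruct (INR_unbounded ((Rabs X + 1 + 1 / (2 * e)) / PI)) as [n Hn].
  pose proof PI_RGT_0.
  set (k := INR n * PI).
  assert (Hk : Rabs X + 1 + 1 / (2 * e) < k).
  { unfold k. apply (Rmult_lt_compat_r PI) in Hn; auto. unfold Rdiv in Hn.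
    rewrite Rmult_assoc, Rinv_l, Rmult_1_r in Hn by lra. lra. }
  assert (HB : 0 < 1 / (2 * e)) by (apply Rdiv_lt_0_compat; lra).
  pose proof (Rabs_pos X). pose proof (Rle_abs X).
  destruct (cos_sin_pn n) as [A [Bq Cq]].
  assert (Hsk : forall t, sin t ^ 2 <= 1).
  { intro t. pose proof (sin2_cos2 t). unfold Rsqr in H2. assert (0 <= cos t ^ 2) by (apply pow2_ge_0). simpl. lra. }
  assert (Hq : forall t, sin t ^ 2 = 0 -> cos t ^ 2 = 1 -> 0 < t - 1 / (2 * e) ->
     0 < Qs 1 1 e t * cos t).
  { intros t Hs Hc Ht. assert (sin t = 0) by (simpl in Hs; nra). unfold Qs. rewrite H2.
    assert (Rabs (sin (4 * e * t) * cos t) <= 1).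
    { rewrite Rabs_mult. assert (Rabs (sin (4*e*t)) <= 1) by (apply Rabs_le, SIN_bound).
      assert (Rabs (cos t) <= 1) by (apply Rabs_le, COS_bound). 
      assert (0 <= Rabs (sin (4*e*t))) by apply Rabs_pos. nra. }
    apply Rabs_le_between in H3. simpl in Hc.
    assert (1 / (2 * e) * (sin (4 * e * t) * cos t) <= 1 / (2 * e)).
    { rewrite <- (Rmult_1_r (1 / (2 * e))) at 2. apply Rmult_le_compat_l; lra. }
    assert (cos t <= 1) by (apply COS_bound).
    assert (t * cos t <= t) by nra.
    replace ((3 * t * cos t + 3 / (2 * e) * 0 - 1 * t - 1 / (2 * e) * sin (4 * e * t)) * cos t)
      with (3 * t * (cos t * cos t) - t * cos t - 1 / (2 * e) * (sin (4 * e * t) * cos t)) by (unfold Rdiv; ring).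
    rewrite Rmult_1_r in Hc. rewrite Hc. lra. }
  assert (Q1 : 0 < Qs 1 1 e k * cos k).
  { apply Hq. unfold k; rewrite Bq; ring. exact A. lra. }
  assert (Q2 : 0 < Qs 1 1 e (k + PI) * cos (k + PI)).
  { pose proof (cos_sin_pn (S n)) as [A' [B' _]].
    replace (k + PI) with (INR (S n) * PI) by (unfold k; rewrite S_INR; ring).
    apply Hq. rewrite B'; ring. exact A'. replace (INR (S n) * PI) with (k + PI) by (unfold k; rewrite S_INR; ring). lra. }
  rewrite neg_cos in Q2.
  assert (Qs 1 1 e k * Qs 1 1 e (k + PI) < 0).
  { assert (0 < Qs 1 1 e k * Qs 1 1 e (k + PI) * - (cos k * cos k)).
    { replace (Qs 1 1 e k * Qs 1 1 e (k + PI) * - (cos k * cos k)) with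
        ((Qs 1 1 e k * cos k) * (Qs 1 1 e (k + PI) * - cos k)) by ring.
      apply Rmult_lt_0_compat; auto. }
    simpl in A. rewrite Rmult_1_r in A. fold k in A. rewrite A in H2. lra. }
  destruct (ivt_strict (Qs 1 1 e) k (k + PI) (cont_Qs 1 1 e) ltac:(lra) H2) as [z [Hz Hqz]].
  exists (z * z). split.
  - assert (1 < z) by lra. assert (z < z * z) by nra. lra.
  - apply (D_zero_of_Qs N e z 1 1); auto; try lra; apply sgn1.
Qed.


Lemma sin_lb3 a : 0 <= a <= 1 -> a - a^3/6 <= sin a.
Proof.
  intros H. pose proof PI2_1. destruct (SIN a) as [L _]; try lra. 
  eapply Rle_trans; [|exact L]. unfold sin_lb, sin_approx, sin_term. simpl.
  assert (a^7 <= a^5). { replace (a^7) with (a^5 * (a*a)) by ring.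
    rewrite <- (Rmult_1_r (a^5)) at 2. apply Rmult_le_compat_l. apply pow_le; lra. nra. }
  assert (0 <= a^5) by (apply pow_le; lra).
  simpl in H1, H2. lra.
Qed.

Definition good (K e : R) := 4 <= K /\ 0 < e /\ 16 * e * (K + 4) < 1.

Lemma good_e K e : good K e -> 0 < e < 1/4 /\ e * K < 1/16.
Proof. intros [H1 [H2 H3]]. split; nra. Qed.

Lemma Fm_gt1 K e k : good K e -> 0 < k <= K -> 1 < Fm e (k * k).
Proof.
  intros G Hk. destruct (good_e K e G) as [He HeK]. rewrite Fm_pos by lra.
  set (x := 4 * e * k).
  assert (Hx : 0 < x <= 1/4) by (unfold x; nra).
  pose proof (sin_lb3 x ltac:(lra)).
  assert (x^3/6 < x/2). { simpl. nra. }
  replace (2 * e * k) with (x / 2) by (unfold x; field).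
  apply (Rmult_lt_reg_r (x/2)). lra. replace (sin x / (x / 2) * (x / 2)) with (sin x) by (field; lra). lra.
Qed.

Lemma sgn_distinct s1 s2 t1 t2 F : sgn s1 -> sgn s2 -> sgn t1 -> sgn t2 -> 1 < F ->
  s1 + s2 * F = t1 + t2 * F -> s1 = t1 /\ s2 = t2.
Proof.
  intros [->| ->] [->| ->] [->| ->] [->| ->] HF H; split; lra.
Qed.

Lemma Qs_P s1 s2 e k : 0 < e -> 0 < k -> Qs s1 s2 e k = 0 -> 3 * Fh e (k * k) = s1 + s2 * Fm e (k * k).
Proof.
  intros He Hk H. assert (P s1 s2 e (k * k) = 0) by (rewrite P_Q, H by auto; unfold Rdiv; ring).
  unfold P in H0. lra.
Qed.

Lemma Qs_distinct K e k s1 s2 t1 t2 : good K e -> 0 < k <= K -> sgn s1 -> sgn s2 -> sgn t1 -> sgn t2 ->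
  Qs s1 s2 e k = 0 -> Qs t1 t2 e k = 0 -> s1 = t1 /\ s2 = t2.
Proof.
  intros G Hk H1 H2 H3 H4 Q1 Q2. destruct (good_e K e G) as [He _].
  apply (sgn_distinct s1 s2 t1 t2 (Fm e (k * k))); auto. eapply Fm_gt1; eauto.
  rewrite <- (Qs_P s1 s2 e k), <- (Qs_P t1 t2 e k); auto; lra.
Qed.

Lemma sin_small x : 0 < x < 1 -> 0 <= sin x <= x.
Proof.
  intro H. split. apply sin_ge_0; pose proof PI2_1; lra. left; apply sin_lt_x; lra.
Qed.

Lemma E4 K e k s1 s2 : good K e -> 0 < k <= K -> sgn s1 -> sgn s2 -> Qs s1 s2 e k = 0 ->
  Qd s1 s2 e 1 k <> 0.
Proof.
  intros G Hk H1 H2 HQ. destruct (good_e K e G) as [He HeK]. destruct G as [GK [_ G3]].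
  rewrite Qd1 by lra. unfold Qs in HQ.
  set (A := 3 / (2 * e)) in *.
  assert (HA : A * e = 3/2) by (unfold A; field; lra).
  assert (HA2 : 24 * (K + 4) < A) by nra.
  pose proof (sin_small (4 * e * k) ltac:(nra)) as Hs.
  assert (HB : 1 / (2 * e) * sin (4 * e * k) <= 2 * k).
  { apply (Rmult_le_reg_l (2 * e)). lra. field_simplify. nra. lra. }
  assert (HB0 : 0 <= 1 / (2 * e) * sin (4 * e * k)).
  { apply Rmult_le_pos. left; apply Rdiv_lt_0_compat; lra. lra. }
  pose proof (COS_bound k). pose proof (SIN_bound k).
  assert (Hsin : A * sin k <= 6 * k /\ - (6 * k) <= A * sin k).
  { destruct H1 as [-> | ->]; destruct H2 as [-> | ->]; split; nra. }
  assert (Hs4 : - (1/4) <= sin k <= 1/4).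
  { split; apply Rnot_lt_le; intro C; nra. }
  pose proof (sin2_cos2 k). unfold Rsqr in H3.
  assert (Hc : 3/4 <= cos k \/ cos k <= - (3/4)).
  { destruct (Rle_dec (3/4) (cos k)); auto. right. apply Rnot_lt_le. intro C. nra. }
  pose proof (COS_bound (4 * e * k)).
  assert (Hks : - (k/4) <= k * sin k <= k / 4) by (split; nra).
  destruct H1 as [-> | ->]; destruct H2 as [-> | ->]; destruct Hc; nra.
Qed.

Definition an (n : nat) : R := INR n * PI - PI / 2.

Lemma an_cos n : cos (an n) = 0.
Proof.
  induction n; unfold an in *.
  - simpl. replace (0 * PI - PI / 2) with (- (PI / 2)) by ring. rewrite cos_neg. apply cos_PI2.
  - replace (INR (S n) * PI - PI / 2) with ((INR n * PI - PI / 2) + PI) by (rewrite S_INR; ring).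
    rewrite neg_cos, IHn. ring.
Qed.

Lemma an_sin n : sin (an n) ^ 2 = 1.
Proof. pose proof (sin2_cos2 (an n)). rewrite an_cos in H. unfold Rsqr in H. simpl. lra. Qed.

Lemma Qs_end K e a s1 s2 : good K e -> 0 < a <= K -> cos a = 0 -> sin a ^ 2 = 1 ->
  sgn s1 -> sgn s2 -> 0 < Qs s1 s2 e a * sin a.
Proof.
  intros G Ha Hc Hs H1 H2. destruct (good_e K e G) as [He HeK].
  unfold Qs. rewrite Hc.
  set (A := 3 / (2 * e)). set (B := 1 / (2 * e)).
  assert (HAB : A - B = 1 / e) by (unfold A, B; field; lra).
  assert (He1 : K < 1 / e). { apply (Rmult_lt_reg_r e). lra. replace (1 / e * e) with 1 by (field; lra). lra. }
  pose proof (SIN_bound (4 * e * a)). pose proof (SIN_bound a).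
  assert (HB : 0 < B) by (unfold B; apply Rdiv_lt_0_compat; lra).
  simpl in Hs. rewrite Rmult_1_r in Hs.
  assert (- B <= B * (sin (4 * e * a) * sin a) <= B).
  { assert (-1 <= sin (4 * e * a) * sin a <= 1) by (split; nra). split; nra. }
  replace ((3 * a * 0 + A * sin a - s1 * a - B * sin (4 * e * a)) * sin a) with
    (A * (sin a * sin a) - s1 * a * sin a - B * (sin (4 * e * a) * sin a)) by ring.
  replace (s2 / (2 * e)) with (s2 * B) by (unfold B; field; lra).
  replace ((3 * a * 0 + A * sin a - s1 * a - s2 * B * sin (4 * e * a)) * sin a) with
    (A * (sin a * sin a) - s1 * (a * sin a) - s2 * (B * (sin (4 * e * a) * sin a))) by ring.
  rewrite Hs. assert (- a <= a * sin a <= a) by (split; nra).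
  destruct H1 as [-> | ->]; destruct H2 as [-> | ->]; lra.
Qed.

Lemma window_zero K e n s1 s2 : good K e -> (1 <= n)%nat -> an n + PI <= K -> sgn s1 -> sgn s2 ->
  exists k, an n < k < an n + PI /\ Qs s1 s2 e k = 0.
Proof.
  intros G Hn HK H1 H2. pose proof PI_RGT_0.
  assert (Ha : 0 < an n). { unfold an. apply le_INR in Hn. simpl in Hn. nra. }
  assert (Q1 := Qs_end K e (an n) s1 s2 G ltac:(lra) (an_cos n) (an_sin n) H1 H2).
  assert (Q2 : 0 < Qs s1 s2 e (an n + PI) * sin (an n + PI)).
  { apply Qs_end with K; auto. lra. rewrite neg_cos, an_cos; ring.
    rewrite neg_sin. pose proof (an_sin n). simpl in *. lra. }
  rewrite neg_sin in Q2.
  apply ivt_strict. apply cont_Qs. lra.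
  assert (0 < Qs s1 s2 e (an n) * Qs s1 s2 e (an n + PI) * - (sin (an n) * sin (an n))).
  { replace (Qs s1 s2 e (an n) * Qs s1 s2 e (an n + PI) * - (sin (an n) * sin (an n))) with
      ((Qs s1 s2 e (an n) * sin (an n)) * (Qs s1 s2 e (an n + PI) * - sin (an n))) by ring.
    apply Rmult_lt_0_compat; auto. }
  pose proof (an_sin n). simpl in H3. rewrite Rmult_1_r in H3. rewrite H3 in H0. lra.
Qed.

Lemma zm_ord0 s1 s2 e k : Qs s1 s2 e k <> 0 -> zero_mult (Qs s1 s2 e) k 0.
Proof. intro H. apply Q_zm. intros; lia. rewrite Qd0; auto. Qed.

Lemma zm_ord1 s1 s2 e k : Qs s1 s2 e k = 0 -> Qd s1 s2 e 1 k <> 0 -> zero_mult (Qs s1 s2 e) k 1.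
Proof. intros H H'. apply Q_zm; auto. intros j Hj. assert (j = 0%nat) by lia. subst. rewrite Qd0; auto. Qed.

Lemma D_simple N K e l : good K e -> 0 < l -> sqrt l <= K -> Dm_minus N 0 0 e l = 0 ->
  zero_mult (Dm_minus N 0 0 e) l 1.
Proof.
  intros G Hl HK HD. destruct (good_e K e G) as [He _].
  set (k := sqrt l) in *. assert (Hk : 0 < k) by (apply sqrt_lt_R0; auto).
  assert (Hkl : l = k * k) by (unfold k; rewrite sqrt_sqrt; lra).
  assert (HQ : Qprod e k = 0).
  { rewrite Hkl, D_Q in HD by lra. unfold Rdiv in HD. apply Rmult_integral in HD.
    destruct HD as [H|H]; auto. exfalso. apply Rinv_neq_0_compat in H; auto. apply pow_nonzero; lra. }
  assert (Hk' : 0 < k <= K) by lra.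
  assert (DS := fun s1 s2 t1 t2 Za Zb a1 a2 a3 a4 => Qs_distinct K e k s1 s2 t1 t2 G Hk' a1 a2 a3 a4 Za Zb).
  pose proof sgn1 as p. pose proof sgnm1 as m.
  unfold Qprod in HQ.
  assert (N1 : (1:R) <> -1) by lra.
  apply Rmult_integral in HQ; destruct HQ as [HQ|Z4];
  [apply Rmult_integral in HQ; destruct HQ as [HQ|Z3];
   [apply Rmult_integral in HQ; destruct HQ as [Z1|Z2]|]|].
  - replace 1%nat with (1 + 0 + 0 + 0)%nat by lia. apply D_zm; [lra|lra| apply zm_ord1; [auto| eapply E4; eauto] | | | ];
    apply zm_ord0; intro Z; destruct (DS _ _ _ _ Z1 Z ltac:(auto) ltac:(auto) ltac:(auto) ltac:(auto)); lra.
  - replace 1%nat with (0 + 1 + 0 + 0)%nat by lia. apply D_zm; [lra|lra| | apply zm_ord1; [auto| eapply E4; eauto] | | ];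
    apply zm_ord0; intro Z; destruct (DS _ _ _ _ Z2 Z ltac:(auto) ltac:(auto) ltac:(auto) ltac:(auto)); lra.
  - replace 1%nat with (0 + 0 + 1 + 0)%nat by lia. apply D_zm; [lra|lra| | | apply zm_ord1; [auto| eapply E4; eauto] | ];
    apply zm_ord0; intro Z; destruct (DS _ _ _ _ Z3 Z ltac:(auto) ltac:(auto) ltac:(auto) ltac:(auto)); lra.
  - replace 1%nat with (0 + 0 + 0 + 1)%nat by lia. apply D_zm; [lra|lra| | | | apply zm_ord1; [auto| eapply E4; eauto] ];
    apply zm_ord0; intro Z; destruct (DS _ _ _ _ Z4 Z ltac:(auto) ltac:(auto) ltac:(auto) ltac:(auto)); lra.
Qed.


Lemma MM_early (f : R -> R) B N : (forall i, (i < N)%nat -> mm f B i = 1%nat) ->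
  forall i, (i <= N)%nat -> MM f B i = i.
Proof.
  intros H i. induction i; intro Hi; simpl; auto. rewrite IHi by lia. rewrite H by lia. lia.
Qed.

Lemma mu_early (f : R -> R) B N (Hpos : forall i, (1 <= mm f B i)%nat) :
  (forall i, (i < N)%nat -> mm f B i = 1%nat) ->
  forall j, (j < N)%nat -> mu_of f B j = zs f B j.
Proof.
  intros H j Hj. unfold mu_of. f_equal. apply idx_uniq; auto.
  rewrite !(MM_early f B N H) by lia. lia.
Qed.

Lemma gap_iff Np a eps mu n lm lp :
  (1 <= Np)%nat -> lam_minus mu n = lm -> lam_plus mu n = lp ->
  (forall k, 0 <= vk Np a k eps lm) -> (forall k, 0 <= vk Np a k eps lp) ->
  forall lam, in_gap Np a eps mu n lam <-> lm < lam < lp.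
Proof.
  intros HN Hm Hp Vm Vp lam. unfold in_gap, Defs.Eminus, Defs.Eplus. rewrite Hm, Hp. split.
  - intro H. destruct (H 0%nat ltac:(lia)) as [em [ep [H1 [H2 H3]]]].
    destruct H1 as [[_ ->]|[C _]]; [|specialize (Vm 0%nat); lra].
    destruct H2 as [[_ ->]|[C _]]; [|specialize (Vp 0%nat); lra]. auto.
  - intros H k Hk. exists lm, lp. split; [left; auto|]. split; [left; auto|]. auto.
Qed.

Lemma vk_nonneg Np a k eps l : 1 <= Rabs (Fm eps l) -> 0 <= vk Np a k eps l.
Proof.
  intro H. unfold vk, ck. pose proof (COS_bound (PI * INR k / INR Np + a)).
  assert (cos (PI * INR k / INR Np + a) ^ 2 <= 1) by (simpl; nra). lra.
Qed.

Lemma sq_lt a b : 0 <= a -> a < b -> a * a < b * b.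
Proof. intros. nra. Qed.

Lemma count_windows Np K e n0 : good K e -> INR n0 * PI + PI / 2 <= K ->
  let f := Dm_minus Np 0 0 e in
  forall n, (n <= n0)%nat -> forall i, (i < 4 * n)%nat -> zs f 0 i < an (S n) * an (S n).
Proof.
  intros G HK f. destruct (good_e K e G) as [He _].
  assert (Hc := cont_D Np e). assert (Hm := D_Hm Np e He). assert (Hu := D_Hu Np e He).
  assert (Hb : forall y, y <= 0 -> f y <> 0) by (intros; apply D_nz_nonpos; auto).
  pose proof (isol_of f Hc Hm) as Hi. pose proof PI_RGT_0.
  assert (Han : forall n, an (S n) = INR n * PI + PI / 2) by (intro; unfold an; rewrite S_INR; field).
  induction n; intros Hn i Hi'. lia.
  assert (IH := IHn ltac:(lia)).
  assert (HW : an (S n) + PI <= K).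
  { rewrite Han. apply le_INR in Hn. rewrite S_INR in Hn.
    assert ((INR n + 1) * PI <= INR n0 * PI) by (apply Rmult_le_compat_r; lra). lra. }
  assert (Hpos : 0 < an (S n)) by (rewrite Han; assert (0 <= INR n * PI) by (apply Rmult_le_pos; [apply pos_INR| lra]); lra).
  destruct (window_zero K e (S n) 1 1 G ltac:(lia) HW sgn1 sgn1) as [k1 [R1 Z1]].
  destruct (window_zero K e (S n) 1 (-1) G ltac:(lia) HW sgn1 sgnm1) as [k2 [R2 Z2]].
  destruct (window_zero K e (S n) (-1) 1 G ltac:(lia) HW sgnm1 sgn1) as [k3 [R3 Z3]].
  destruct (window_zero K e (S n) (-1) (-1) G ltac:(lia) HW sgnm1 sgnm1) as [k4 [R4 Z4]].
  assert (Hanp : an (S (S n)) = an (S n) + PI) by (unfold an; rewrite (S_INR (S n)); ring).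
  assert (DK : forall k s1 s2, an (S n) < k < an (S n) + PI -> Qs s1 s2 e k = 0 -> sgn s1 -> sgn s2 ->
     f (k * k) = 0 /\ exists j, k * k = zs f 0 j /\ (4 * n <= j)%nat /\
       (zs f 0 (4 * n + 3) >= an (S (S n)) * an (S (S n)) -> (j <= 4 * n + 2)%nat)).
  { intros k s1 s2 Rk Zk S1 S2. assert (Fz : f (k * k) = 0) by (apply (D_zero_of_Qs Np e k s1 s2); auto; lra).
    split; auto. destruct (zs_all f 0 Hi Hu Hb _ Fz) as [j Hj]. exists j. split; auto. split.
    - destruct (Compare_dec.le_lt_dec (4 * n) j) as [L|L]; auto. exfalso.
      specialize (IH j L). rewrite <- Hj in IH. assert (an (S n) * an (S n) < k * k) by (apply sq_lt; lra). lra.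
    - intro C. destruct (Compare_dec.le_lt_dec j (4 * n + 2)) as [L|L]; auto. exfalso.
      assert (zs f 0 (4 * n + 3) <= zs f 0 j) by (apply zs_le; auto; lia).
      rewrite Hanp in C. assert (k * k < (an (S n) + PI) * (an (S n) + PI)) by (apply sq_lt; lra). lra. }
  assert (Hlast : zs f 0 (4 * n + 3) < an (S (S n)) * an (S (S n))).
  { apply Rnot_ge_lt. intro C.
    destruct (DK k1 1 1 R1 Z1 sgn1 sgn1) as [_ [j1 [E1 [L1 U1]]]].
    destruct (DK k2 1 (-1) R2 Z2 sgn1 sgnm1) as [_ [j2 [E2 [L2 U2]]]].
    destruct (DK k3 (-1) 1 R3 Z3 sgnm1 sgn1) as [_ [j3 [E3 [L3 U3]]]].
    destruct (DK k4 (-1) (-1) R4 Z4 sgnm1 sgnm1) as [_ [j4 [E4' [L4 U4]]]].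
    specialize (U1 C). specialize (U2 C). specialize (U3 C). specialize (U4 C).
    assert (Hk : forall ka kb sa sb ta tb ja jb, an (S n) < ka < an (S n) + PI -> an (S n) < kb < an (S n) + PI ->
      Qs sa sb e ka = 0 -> Qs ta tb e kb = 0 -> sgn sa -> sgn sb -> sgn ta -> sgn tb ->
      ka * ka = zs f 0 ja -> kb * kb = zs f 0 jb -> ja = jb -> sa = ta /\ sb = tb).
    { intros ka kb sa sb ta tb ja jb Ra Rb Za Zb A1 A2 A3 A4 Ea Eb Ej. subst jb.
      assert (ka = kb). { rewrite <- Eb in Ea. nra. } subst kb.
      apply (Qs_distinct K e ka); auto. split; lra. }
    assert (j1 <> j2) by (intro X; destruct (Hk _ _ _ _ _ _ _ _ R1 R2 Z1 Z2 sgn1 sgn1 sgn1 sgnm1 E1 E2 X); lra).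
    assert (j1 <> j3) by (intro X; destruct (Hk _ _ _ _ _ _ _ _ R1 R3 Z1 Z3 sgn1 sgn1 sgnm1 sgn1 E1 E3 X); lra).
    assert (j1 <> j4) by (intro X; destruct (Hk _ _ _ _ _ _ _ _ R1 R4 Z1 Z4 sgn1 sgn1 sgnm1 sgnm1 E1 E4' X); lra).
    assert (j2 <> j3) by (intro X; destruct (Hk _ _ _ _ _ _ _ _ R2 R3 Z2 Z3 sgn1 sgnm1 sgnm1 sgn1 E2 E3 X); lra).
    assert (j2 <> j4) by (intro X; destruct (Hk _ _ _ _ _ _ _ _ R2 R4 Z2 Z4 sgn1 sgnm1 sgnm1 sgnm1 E2 E4' X); lra).
    assert (j3 <> j4) by (intro X; destruct (Hk _ _ _ _ _ _ _ _ R3 R4 Z3 Z4 sgnm1 sgn1 sgnm1 sgnm1 E3 E4' X); lra).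
    lia. }
  assert (zs f 0 i <= zs f 0 (4 * n + 3)) by (apply zs_le; auto; lia). lra.
Qed.

Lemma sqrt_lt_b x b : 0 <= x -> 0 < b -> x < b * b -> sqrt x < b.
Proof.
  intros Hx Hb H. apply Rnot_le_lt. intro C. pose proof (sqrt_sqrt x Hx).
  assert (b * b <= sqrt x * sqrt x) by (apply Rmult_le_compat; lra). lra.
Qed.

Theorem proposition3p5 :
  forall Np : nat, (1 <= Np)%nat ->
  forall n0 : nat,
  exists eps0 : R, 0 < eps0 /\
  forall eps : R, 0 < eps < eps0 ->
  exists mu : nat -> R,
    enum_zeros (Dm_minus Np 0 0%nat eps) mu /\
    forall (a : R) (n : nat), (1 <= n <= n0)%nat ->
      (forall lam : R, in_gap Np a eps mu n lam <-> in_gap Np 0 eps mu n lam) /\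
      (exists lam : R, in_gap Np 0 eps mu n lam).
Proof.
  intros Np HN n0.
  set (K := 4 * (INR n0 + 1)).
  pose proof (pos_INR n0) as Hn0. pose proof PI_RGT_0 as HPI. pose proof PI_4 as HPI4.
  assert (HK4 : 4 <= K) by (unfold K; lra).
  exists (1 / (16 * (K + 4))). split. apply Rdiv_lt_0_compat; lra.
  intros eps He.
  assert (G : good K eps).
  { split; auto. split. lra. destruct He as [He1 He2].
    apply (Rmult_lt_compat_r (16 * (K + 4))) in He2; [|lra].
    replace (1 / (16 * (K + 4)) * (16 * (K + 4))) with 1 in He2 by (field; lra). lra. }
  destruct (good_e K eps G) as [He' HeK].
  assert (HK : INR n0 * PI + PI / 2 <= K).
  { unfold K. assert (INR n0 * PI <= INR n0 * 4) by (apply Rmult_le_compat_l; lra). lra. }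
  set (f := Dm_minus Np 0 0%nat eps).
  assert (Hc := cont_D Np eps). assert (Hm := D_Hm Np eps He'). assert (Hu := D_Hu Np eps He').
  assert (Hb : forall y, y <= 0 -> f y <> 0) by (intros; apply D_nz_nonpos; auto).
  pose proof (isol_of f Hc Hm) as Hi.
  exists (mu_of f 0). split.
  { apply enum_exists; auto. }
  intros a n Hn.
  assert (Hpos : forall i, (1 <= mm f 0 i)%nat) by (intro; apply mm_spec; auto).
  assert (Zpos : forall i, 0 < zs f 0 i).
  { intro i. apply Rnot_le_lt. intro C. apply (Hb _ C). apply zs_prop; auto. }
  assert (Han : an (S n0) = INR n0 * PI + PI / 2) by (unfold an; rewrite S_INR; field).
  assert (Zb : forall i, (i < 4 * n0)%nat -> sqrt (zs f 0 i) <= K).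
  { intros i Hi'. pose proof (count_windows Np K eps n0 G HK n0 (le_n _) i Hi').
    assert (0 <= INR n0 * PI) by (apply Rmult_le_pos; lra).
    left. eapply Rlt_le_trans. apply sqrt_lt_b; [left; apply Zpos| |exact H]. rewrite Han; lra. rewrite Han; lra. }
  assert (Simple : forall i, (i < 4 * n0)%nat -> mm f 0 i = 1%nat).
  { intros i Hi'. destruct (mm_spec f 0 Hc Hm Hu i) as [Z _].
    apply (zm_unique f (zs f 0 i)); auto. apply (D_simple Np K eps); auto. apply zs_prop; auto. }
  assert (Mu : forall j, (j < 4 * n0)%nat -> mu_of f 0 j = zs f 0 j) by (apply mu_early; auto).
  set (lm := zs f 0 (4 * (n - 1) + 1)). set (lp := zs f 0 (4 * (n - 1) + 2)).
  assert (Em : lam_minus (mu_of f 0) n = lm) by (unfold lam_minus; apply Mu; lia).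
  assert (Ep : lam_plus (mu_of f 0) n = lp) by (unfold lam_plus; apply Mu; lia).
  assert (Hlt : lm < lp) by (apply zs_mono; auto; lia).
  assert (Fb : forall i, (i < 4 * n0)%nat -> 1 <= Rabs (Fm eps (zs f 0 i))).
  { intros i Hi'. pose proof (Zpos i). pose proof (Zb i Hi').
    assert (1 < Fm eps (sqrt (zs f 0 i) * sqrt (zs f 0 i))).
    { apply (Fm_gt1 K); auto. split; auto. apply sqrt_lt_R0; auto. }
    rewrite sqrt_sqrt in H1 by lra. rewrite Rabs_right; lra. }
  assert (V : forall a k, 0 <= vk Np a k eps lm /\ 0 <= vk Np a k eps lp).
  { intros b k. split; apply vk_nonneg; apply Fb; lia. }
  split.
  - intro lam. rewrite (gap_iff Np a eps (mu_of f 0) n lm lp HN Em Ep), (gap_iff Np 0 eps (mu_of f 0) n lm lp HN Em Ep);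
      try (intro k; apply V). tauto.
  - exists ((lm + lp) / 2). apply (gap_iff Np 0 eps (mu_of f 0) n lm lp HN Em Ep); try (intro k; apply V). lra.
Qed.
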